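(* For any integers $W\ge6$, $L\ge2$, $s\in\mathbb{N}$ and any $\xi_i\in[0,1]$ for $i=0,1,\dots,W^2L^2-1$, there exists a ReLU network $\phi:\mathbb{R}\to\mathbb{R}$ with $$\phi\in\mathcal{NN}\big(8s(2W+1)\lceil\log_2(2W)\rceil+2,\ 4L\lceil\log_2(2L)\rceil+1\big)$$ such that $\mathrm{Lip}\,\phi\le4\cdot2^{L^2}+2L^2$, $|\phi(i)-\xi_i|\le(WL)^{-2s}$ for $i=0,1,\dots,W^2L^2-1$, and $\phi(t)\in[0,1]$ for all $t\in\mathbb{R}$.
   Context: $\sigma(x)=\max(x,0)$. $\mathcal{NN}(W,L)$: functions $\phi(x)=T_L(\sigma(T_{L-1}(\cdots\sigma(T_0(x))\cdots)))$ with affine maps $T_l$, ReLU componentwise, all hidden layer sizes $\le W$ and depth $\le L$. $\mathrm{Lip}\,\phi$ is the Lipschitz constant of $\phi$. *)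

(* Defs.v *)
From Stdlib Require Import Reals Lra Lia List Arith.
Import ListNotations.
Open Scope R_scope.

Definition relu (x : R) : R := Rmax x 0.

Fixpoint sumR (n : nat) (f : nat -> R) : R :=
  match n with
  | O => 0
  | S k => sumR k f + f k
  end.

(* An affine map R^a_in -> R^a_out, x |-> A x + b; vectors are nat -> R
   (only indices below the dimension matter). *)
Record affine := mkAffine {
  a_in : nat;
  a_out : nat;
  a_mat : nat -> nat -> R;   (* a_mat i j : row i < a_out, column j < a_in *)
  a_bias : nat -> R
}.

Definition eval_affine (T : affine) (x : nat -> R) : nat -> R :=
  fun i => sumR (a_in T) (fun j => a_mat T i j * x j) + a_bias T i.

Fixpoint eval_net (Ts : list affine) (x : nat -> R) : nat -> R :=
  match Ts with
  | [] => x
  | [T] => eval_affine T x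
  | T :: Ts' => eval_net Ts' (fun i => relu (eval_affine T x i))
  end.

Fixpoint chain_ok (d : nat) (Ts : list affine) : Prop :=
  match Ts with
  | [] => d = 1%nat
  | T :: Ts' => a_in T = d /\ chain_ok (a_out T) Ts'
  end.

Fixpoint hidden_le (W : nat) (Ts : list affine) : Prop :=
  match Ts with
  | [] => True
  | [T] => True
  | T :: Ts' => (a_out T <= W)%nat /\ hidden_le W Ts'
  end.

Definition realize (Ts : list affine) (t : R) : R :=
  eval_net Ts (fun _ => t) 0%nat.

(* NN(W,L): ReLU networks R -> R with L' <= L hidden layers
   (L'+1 affine maps), all hidden layer sizes <= W. *)
Definition NN (W L : nat) (phi : R -> R) : Prop :=
  exists Ts : list affine,
    Ts <> [] /\ chain_ok 1 Ts /\ hidden_le W Ts /\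
    (length Ts <= S L)%nat /\
    forall t, phi t = realize Ts t.

Definition lip_le (phi : R -> R) (c : R) : Prop :=
  forall x y, Rabs (phi x - phi y) <= c * Rabs (x - y).

(* Main.v *)
Require Import Defs.
From Stdlib Require Import Reals Lra Lia List Arith ZArith.
Import ListNotations.
Open Scope R_scope.

Lemma sumR_ext n f g : (forall i, (i < n)%nat -> f i = g i) -> sumR n f = sumR n g.
Proof. induction n; simpl; intros H; [reflexivity|]. rewrite IHn by (intros; apply H; lia). rewrite H by lia. reflexivity. Qed.

Lemma sumR_plus n f g : sumR n (fun i => f i + g i) = sumR n f + sumR n g.
Proof. induction n; simpl; [lra|]. rewrite IHn. lra. Qed.

Lemma sumR_minus n f g : sumR n (fun i => f i - g i) = sumR n f - sumR n g.
Proof. induction n; simpl; [lra|]. rewrite IHn. lra. Qed.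

Lemma sumR_scal n c f : sumR n (fun i => c * f i) = c * sumR n f.
Proof. induction n; simpl; [lra|]. rewrite IHn. lra. Qed.

Lemma sumR_zero n f : (forall i, (i < n)%nat -> f i = 0) -> sumR n f = 0.
Proof. intros H. rewrite (sumR_ext n f (fun _ => 0)) by auto. induction n; simpl; [lra|]. rewrite IHn by (intros; apply H; lia). lra. Qed.

Lemma sumR_const n c : sumR n (fun _ => c) = INR n * c.
Proof. induction n; simpl sumR; [simpl; lra|]. rewrite IHn, S_INR. lra. Qed.

Lemma sumR_shift n f : sumR (S n) f = f 0%nat + sumR n (fun i => f (S i)).
Proof. induction n; simpl in *; [lra|]. rewrite IHn. lra. Qed.

Lemma sumR_add a b f : sumR (a + b) f = sumR a f + sumR b (fun i => f (a + i)%nat).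
Proof. induction b; simpl. rewrite Nat.add_0_r; lra. rewrite Nat.add_succ_r. simpl. rewrite IHb. lra. Qed.

Lemma sumR_mul a b f : sumR (a * b) f = sumR a (fun c => sumR b (fun o => f (c * b + o)%nat)).
Proof. induction a; simpl; [lra|]. rewrite Nat.add_comm, sumR_add, IHa. lra. Qed.

Lemma sumR_split3 a b f : sumR (a + S b) f = sumR a f + f a + sumR b (fun i => f (a + S i)%nat).
Proof. rewrite sumR_add, sumR_shift, Nat.add_0_r. lra. Qed.

Lemma sumR_le n f g : (forall i, (i < n)%nat -> f i <= g i) -> sumR n f <= sumR n g.
Proof. induction n as [|n IHn]; simpl; intros H; [lra|]. specialize (IHn (fun i Hi => H i ltac:(lia))). specialize (H n ltac:(lia)). lra. Qed.

Lemma sumR_abs n f : Rabs (sumR n f) <= sumR n (fun i => Rabs (f i)).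
Proof. induction n; simpl. rewrite Rabs_R0; lra. eapply Rle_trans; [apply Rabs_triang|]. lra. Qed.

Lemma sumR_pt n k a : (k < n)%nat -> sumR n (fun i => if Nat.eqb i k then a else 0) = a.
Proof. induction n as [|n IHn]; intros H; [lia|]. simpl. destruct (Nat.eqb n k) eqn:E.
 - apply Nat.eqb_eq in E; subst k. rewrite sumR_zero; [lra|]. intros i Hi. destruct (Nat.eqb_spec i n); [lia|auto].
 - apply Nat.eqb_neq in E. rewrite IHn by lia. lra. Qed.

Lemma sumR_pt_le n k a : 0 <= a -> sumR n (fun i => if Nat.eqb i k then a else 0) <= a.
Proof. intros Ha. destruct (Nat.lt_ge_cases k n) as [Hk|Hk]. rewrite sumR_pt by exact Hk; lra.
 rewrite sumR_zero; [lra|]. intros i Hi. destruct (Nat.eqb_spec i k); [lia|auto]. Qed.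

Lemma sumR_geom n : sumR n (fun i => 2 ^ i) = 2 ^ n - 1.
Proof. induction n; simpl; [lra|]. rewrite IHn. lra. Qed.

Lemma sumR_geom3 n : sumR n (fun i => 2 * 3 ^ (S i)) = 3 ^ (S n) - 3.
Proof. induction n as [|n IHn]; [simpl; lra|]. cbn [sumR]. rewrite IHn. simpl. lra. Qed.

Lemma relu_pos x : 0 <= x -> relu x = x.
Proof. unfold relu, Rmax. destruct (Rle_dec x 0); lra. Qed.
Lemma relu_neg x : x <= 0 -> relu x = 0.
Proof. unfold relu, Rmax. destruct (Rle_dec x 0); lra. Qed.
Lemma relu_ge0 x : 0 <= relu x.
Proof. unfold relu, Rmax. destruct (Rle_dec x 0); lra. Qed.
Lemma relu_ge x : x <= relu x.
Proof. unfold relu, Rmax. destruct (Rle_dec x 0); lra. Qed.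
Lemma relu_lip x y : Rabs (relu x - relu y) <= Rabs (x - y).
Proof. unfold relu, Rmax. destruct (Rle_dec x 0), (Rle_dec y 0); unfold Rabs; repeat destruct Rcase_abs; lra. Qed.
Lemma relu_mono x y : x <= y -> relu x <= relu y.
Proof. unfold relu, Rmax. destruct (Rle_dec x 0), (Rle_dec y 0); lra. Qed.
Lemma relu_id x : relu (relu x) = relu x.
Proof. apply relu_pos, relu_ge0. Qed.
Lemma relu_pm x : relu x - relu (- x) = x.
Proof. unfold relu, Rmax. destruct (Rle_dec x 0), (Rle_dec (-x) 0); lra. Qed.

Ltac relu_cases :=
  repeat match goal with
  | |- context [relu ?x] =>
      let H := fresh in destruct (Rle_dec x 0) as [H|H];
      [rewrite (relu_neg x H) | rewrite (relu_pos x (Rlt_le _ _ (Rnot_le_lt _ _ H)))]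
  end.

Definition clampA (A x : R) := relu x - relu (x - A).
Lemma clampA_lo A x : 0 <= A -> x <= 0 -> clampA A x = 0.
Proof. intros. unfold clampA. relu_cases; lra. Qed.
Lemma clampA_hi A x : 0 <= A -> A <= x -> clampA A x = A.
Proof. intros. unfold clampA. relu_cases; lra. Qed.
Lemma clampA_mid A x : 0 <= x <= A -> clampA A x = x.
Proof. intros. unfold clampA. relu_cases; lra. Qed.
Lemma clampA_range A x : 0 <= A -> 0 <= clampA A x <= A.
Proof. intros. unfold clampA. relu_cases; lra. Qed.
Lemma clampA_lip A x y : 0 <= A -> Rabs (clampA A x - clampA A y) <= Rabs (x - y).
Proof. intros. unfold clampA. relu_cases; unfold Rabs; repeat destruct Rcase_abs; lra. Qed.
Lemma clampA_mono A x y : 0 <= A -> x <= y -> clampA A x <= clampA A y.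
Proof. intros. unfold clampA. relu_cases; lra. Qed.

Definition cell_lip (f : R -> R) (C : R) :=
  forall n : Z, forall x y, IZR n <= x <= IZR n + 1 -> IZR n <= y <= IZR n + 1 ->
    Rabs (f x - f y) <= C * Rabs (x - y).

Lemma cell_use f C n x y : cell_lip f C -> IZR n <= x -> x <= y -> y <= IZR n + 1 ->
  Rabs (f y - f x) <= C * (y - x).
Proof. intros Hc H1 H2 H3. specialize (Hc n y x ltac:(lra) ltac:(lra)).
  rewrite (Rabs_right (y - x)) in Hc by lra. exact Hc. Qed.

Lemma lip_cells_aux f C : 0 <= C -> cell_lip f C ->
  forall k : nat, forall n x y, IZR n <= x -> x <= y -> y <= IZR n + INR k ->
    Rabs (f y - f x) <= C * (y - x).
Proof.
  intros HC Hc k. induction k as [|k IH]; intros n x y H1 H2 H3.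
  - simpl in H3. assert (x = y) by lra. subst. replace (f y - f y) with 0 by lra. rewrite Rabs_R0. lra.
  - rewrite S_INR in H3.
    destruct (Rle_dec y (IZR n + INR k)) as [Hy|Hy]. { apply (IH n); lra. }
    set (z := IZR n + INR k).
    assert (Hz : z = IZR (n + Z.of_nat k)) by (unfold z; rewrite plus_IZR, <- INR_IZR_INZ; reflexivity).
    destruct (Rle_dec x z) as [Hx|Hx].
    + assert (A1 : Rabs (f z - f x) <= C * (z - x)) by (apply (IH n); unfold z in *; lra).
      assert (A2 : Rabs (f y - f z) <= C * (y - z)).
      { apply (cell_use f C (n + Z.of_nat k)%Z); [exact Hc| | |]; try rewrite <- Hz; unfold z in *; lra. }
      replace (f y - f x) with ((f y - f z) + (f z - f x)) by ring.
      eapply Rle_trans; [apply Rabs_triang|]. lra.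
    + apply (cell_use f C (n + Z.of_nat k)%Z); [exact Hc| | |]; try rewrite <- Hz; unfold z in *; lra.
Qed.

Lemma lip_cells f C : 0 <= C -> cell_lip f C -> forall x y, Rabs (f x - f y) <= C * Rabs (x - y).
Proof.
  intros HC Hc.
  assert (K : forall x y, x <= y -> Rabs (f y - f x) <= C * (y - x)).
  { intros x y Hxy. destruct (archimed x) as [Ax1 Ax2]. destruct (archimed y) as [Ay1 Ay2].
    set (n := (up x - 1)%Z).
    assert (Hn : IZR n <= x) by (unfold n; rewrite minus_IZR; simpl; lra).
    assert (Hk : (0 <= up y - n)%Z).
    { apply le_IZR. rewrite minus_IZR. lra. }
    apply (lip_cells_aux f C HC Hc (Z.to_nat (up y - n)) n); try lra.
    rewrite INR_IZR_INZ, Z2Nat.id by lia. rewrite minus_IZR. lra. }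
  intros x y. destruct (Rle_dec x y) as [H|H].
  - rewrite Rabs_minus_sym, (Rabs_left1 (x - y)) by lra. replace (- (x - y)) with (y - x) by ring. auto.
  - rewrite (Rabs_right (x - y)) by lra. apply K. lra.
Qed.

Lemma sumR_profile n a A X F : (a < n)%nat ->
  (forall k, (k < a)%nat -> F k = A k) -> F a = X ->
  (forall k, (a < k < n)%nat -> F k = 0) ->
  sumR n F = sumR a A + X.
Proof.
  intros Ha H1 H2 H3. replace n with (a + S (n - a - 1))%nat by lia.
  rewrite sumR_split3. rewrite (sumR_ext a F A) by auto. rewrite H2.
  rewrite (sumR_zero (n - a - 1) (fun i => F (a + S i)%nat)); [lra|]. intros i Hi. apply H3. lia.
Qed.

Lemma sumR_profile_all n A F : (forall k, (k < n)%nat -> F k = A k) -> sumR n F = sumR n A.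
Proof. apply sumR_ext. Qed.

Lemma sumR_telescope a (h : nat -> R) : sumR a (fun m => h (S m) - h m) = h a - h 0%nat.
Proof. induction a; simpl; [lra|]. rewrite IHa. lra. Qed.

Definition alt (a : nat) : R := if Nat.even a then 0 else 1.

Lemma m1_even a : Nat.even a = true -> (-1) ^ a = 1.
Proof. intros E. apply Nat.even_spec in E. destruct E as [k ->]. apply pow_1_even. Qed.
Lemma m1_odd a : Nat.even a = false -> (-1) ^ a = -1.
Proof. intros E. assert (Nat.odd a = true) by (rewrite <- Nat.negb_even, E; reflexivity).
  apply Nat.odd_spec in H. destruct H as [k ->]. replace (2 * k + 1)%nat with (S (2 * k)) by lia. apply pow_1_odd. Qed.

Lemma sumR_alt a : sumR a (fun k => (-1) ^ k) = alt a.
Proof. induction a; simpl; [unfold alt; simpl; lra|]. rewrite IHa. unfold alt.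
  rewrite Nat.even_succ, <- Nat.negb_even. destruct (Nat.even a) eqn:E; simpl.
  - rewrite m1_even by exact E. lra.
  - rewrite m1_odd by exact E. lra.
Qed.

Lemma pow_m1_sq k : (-1) ^ k * (-1) ^ k = 1.
Proof. rewrite <- pow_add. replace (k + k)%nat with (2 * k)%nat by lia. apply pow_1_even. Qed.

Lemma pow_m1_abs k : Rabs ((-1) ^ k) = 1.
Proof. rewrite <- RPow_abs. replace (Rabs (-1)) with 1 by (rewrite Rabs_left by lra; lra). apply pow1. Qed.

Definition clk (P : nat) (x : R) (k : nat) := clampA (INR P - 1) (x - INR k * INR P).
Definition zz (P cnt : nat) (x : R) := sumR cnt (fun k => (-1) ^ k * clk P x k).
Definition cum (P cnt : nat) (x : R) := sumR cnt (fun k => clk P x k).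

Lemma clk_sat P x k : (1 <= P)%nat -> INR k * INR P + INR P - 1 <= x -> clk P x k = INR P - 1.
Proof. intros HP H. unfold clk. apply clampA_hi. apply (le_INR 1) in HP; simpl in HP; lra. lra. Qed.
Lemma clk_zero P x k : (1 <= P)%nat -> x <= INR k * INR P -> clk P x k = 0.
Proof. intros HP H. unfold clk. apply clampA_lo. apply (le_INR 1) in HP; simpl in HP; lra. lra. Qed.
Lemma clk_mid P x k : INR k * INR P <= x <= INR k * INR P + INR P - 1 -> clk P x k = x - INR k * INR P.
Proof. intros H. unfold clk. apply clampA_mid. lra. Qed.

Lemma zz_seg P cnt a x : (1 <= P)%nat -> (a < cnt)%nat ->
  INR a * INR P <= x <= INR a * INR P + INR P - 1 ->
  zz P cnt x = (INR P - 1) * alt a + (-1) ^ a * (x - INR a * INR P).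
Proof.
  intros HP Ha Hx. unfold zz.
  rewrite (sumR_profile cnt a (fun k => (-1) ^ k * (INR P - 1)) ((-1) ^ a * (x - INR a * INR P))); auto.
  - rewrite (sumR_ext a _ (fun k => (INR P - 1) * (-1) ^ k)) by (intros; ring).
    rewrite sumR_scal, sumR_alt. ring.
  - intros k Hk. rewrite clk_sat; auto. assert (INR k + 1 <= INR a) by (rewrite <- S_INR; apply le_INR; lia).
    assert (0 <= INR P) by apply pos_INR. nra.
  - rewrite clk_mid; auto.
  - intros k Hk. rewrite clk_zero; auto. ring. assert (INR a + 1 <= INR k) by (rewrite <- S_INR; apply le_INR; lia).
    assert (0 <= INR P) by apply pos_INR. nra.
Qed.

Lemma zz_flat P cnt a x : (1 <= P)%nat -> (a <= cnt)%nat ->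
  INR a * INR P - 1 <= x -> ((a < cnt)%nat -> x <= INR a * INR P) ->
  zz P cnt x = (INR P - 1) * alt a.
Proof.
  intros HP Ha Hx1 Hx2. unfold zz.
  destruct (Nat.eq_dec a cnt) as [E|E].
  - subst a. rewrite (sumR_ext cnt _ (fun k => (INR P - 1) * (-1) ^ k)).
    + rewrite sumR_scal, sumR_alt. ring.
    + intros k Hk. rewrite clk_sat; auto. ring. assert (INR k + 1 <= INR cnt) by (rewrite <- S_INR; apply le_INR; lia).
      assert (0 <= INR P) by apply pos_INR. nra.
  - specialize (Hx2 ltac:(lia)).
    rewrite (sumR_profile cnt a (fun k => (-1) ^ k * (INR P - 1)) 0); auto; try lia.
    + rewrite (sumR_ext a _ (fun k => (INR P - 1) * (-1) ^ k)) by (intros; ring).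
      rewrite sumR_scal, sumR_alt. ring.
    + intros k Hk. rewrite clk_sat; auto. assert (INR k + 1 <= INR a) by (rewrite <- S_INR; apply le_INR; lia).
      assert (0 <= INR P) by apply pos_INR. nra.
    + rewrite clk_zero; auto. ring.
    + intros k Hk. rewrite clk_zero; auto. ring. assert (INR a + 1 <= INR k) by (rewrite <- S_INR; apply le_INR; lia).
      assert (0 <= INR P) by apply pos_INR. nra.
Qed.

Lemma zz_neg P cnt x : (1 <= P)%nat -> x <= 0 -> zz P cnt x = 0.
Proof. intros HP Hx. unfold zz. apply sumR_zero. intros k Hk. rewrite clk_zero; auto. ring.
  assert (0 <= INR k * INR P) by (apply Rmult_le_pos; apply pos_INR). lra. Qed.

Lemma clk_mono P x y k : (1 <= P)%nat -> x <= y -> clk P x k <= clk P y k.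
Proof. intros HP H. unfold clk. apply clampA_mono. apply (le_INR 1) in HP; simpl in HP; lra. lra. Qed.

Lemma clk_lip P x y k : (1 <= P)%nat -> x <= y -> clk P y k - clk P x k <= y - x.
Proof. intros HP H. unfold clk. pose proof (clampA_lip (INR P - 1) (y - INR k * INR P) (x - INR k * INR P)).
  apply (le_INR 1) in HP; simpl in HP. specialize (H0 ltac:(lra)). unfold Rabs in H0 at 1 2.
  repeat destruct Rcase_abs; lra. Qed.

Lemma cum_mono P cnt x y : (1 <= P)%nat -> x <= y -> cum P cnt x <= cum P cnt y.
Proof. intros HP H. unfold cum. apply sumR_le. intros. apply clk_mono; auto. Qed.

Lemma cum_lip P cnt x y : (1 <= P)%nat -> x <= y -> cum P cnt y - cum P cnt x <= y - x.
Proof.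
  intros HP. revert x y. induction cnt as [|c IH]; intros x y H.
  - unfold cum; simpl; lra.
  - unfold cum in *. simpl sumR.
    assert (HPr : 1 <= INR P) by (apply (le_INR 1) in HP; simpl in HP; lra).
    assert (Hc0 : 0 <= INR c * INR P) by (apply Rmult_le_pos; apply pos_INR).
    destruct (Rle_dec y (INR c * INR P)) as [Hy|Hy].
    + rewrite (clk_zero P y c), (clk_zero P x c) by (auto; lra). specialize (IH x y H). lra.
    + destruct (Rle_dec (INR c * INR P - 1) x) as [Hx|Hx].
      * assert (E : forall z, INR c * INR P - 1 <= z -> sumR c (fun k => clk P z k) = sumR c (fun k => (INR P - 1))).
        { intros z Hz. apply sumR_ext. intros k Hk. apply clk_sat; auto.
          assert (INR k + 1 <= INR c) by (rewrite <- S_INR; apply le_INR; lia). nra. }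
        rewrite (E x), (E y) by lra. pose proof (clk_lip P x y c HP H). lra.
      * set (z1 := INR c * INR P - 1). set (z2 := INR c * INR P).
        pose proof (IH x z1 ltac:(unfold z1; lra)).
        assert (E : forall z, INR c * INR P - 1 <= z -> sumR c (fun k => clk P z k) = sumR c (fun k => (INR P - 1))).
        { intros z Hz. apply sumR_ext. intros k Hk. apply clk_sat; auto.
          assert (INR k + 1 <= INR c) by (rewrite <- S_INR; apply le_INR; lia). nra. }
        rewrite (E y) by lra. rewrite (E z1) in H0 by (unfold z1; lra).
        rewrite (clk_zero P x c) by (auto; lra).
        pose proof (clk_lip P z2 y c HP ltac:(unfold z2; lra)).
        rewrite (clk_zero P z2 c) in H1 by (auto; unfold z2; lra). unfold z1, z2 in *. lra.
Qed.

Lemma zz_lip P cnt x y : (1 <= P)%nat -> Rabs (zz P cnt x - zz P cnt y) <= Rabs (x - y).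
Proof.
  intros HP.
  assert (K : forall x y, x <= y -> Rabs (zz P cnt y - zz P cnt x) <= y - x).
  { intros a b Hab. unfold zz. rewrite <- sumR_minus.
    eapply Rle_trans; [apply sumR_abs|].
    rewrite (sumR_ext cnt _ (fun k => clk P b k - clk P a k)).
    - rewrite sumR_minus. fold (cum P cnt b) (cum P cnt a). apply cum_lip; auto.
    - intros k Hk. rewrite <- Rmult_minus_distr_l, Rabs_mult, pow_m1_abs, Rmult_1_l.
      apply Rabs_right. pose proof (clk_mono P a b k HP Hab). lra. }
  destruct (Rle_dec x y).
  - rewrite Rabs_minus_sym, (Rabs_left1 (x - y)) by lra. replace (- (x - y)) with (y - x) by ring. auto.
  - rewrite (Rabs_right (x - y)) by lra. apply K. lra.
Qed.

Definition Ob (N : nat) (H : nat -> R) (b : R) :=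
  sumR N (fun j => relu (H j + 2 * (b - INR j) + 1) - relu (H j + 2 * (b - INR j) - 1))
  - relu (2 * b + 1) + relu (2 * b - 2 * INR N + 1).

Lemma Ob_val N H b0 : (b0 < N)%nat -> (forall j, (j < N)%nat -> -1 <= H j <= 1) ->
  Ob N H (INR b0) = H b0.
Proof.
  intros Hb HH. unfold Ob.
  assert (HN : INR b0 + 1 <= INR N) by (rewrite <- S_INR; apply le_INR; lia).
  assert (Hb0 : 0 <= INR b0) by apply pos_INR.
  rewrite (sumR_profile N b0 (fun _ => 2) (H b0 + 1)); auto.
  - rewrite sumR_const. rewrite (relu_pos (2 * INR b0 + 1)) by lra.
    rewrite (relu_neg (2 * INR b0 - 2 * INR N + 1)) by lra. lra.
  - intros k Hk. specialize (HH k ltac:(lia)).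
    assert (INR k + 1 <= INR b0) by (rewrite <- S_INR; apply le_INR; lia).
    rewrite !relu_pos by lra. lra.
  - specialize (HH b0 Hb). replace (INR b0 - INR b0) with 0 by ring.
    rewrite relu_pos by lra. rewrite relu_neg by lra. lra.
  - intros k Hk. specialize (HH k ltac:(lia)).
    assert (INR b0 + 1 <= INR k) by (rewrite <- S_INR; apply le_INR; lia).
    rewrite !relu_neg by lra. lra.
Qed.

Lemma Ob_cell N H b0 b : (S b0 < N)%nat -> (forall j, (j < N)%nat -> -1 <= H j <= 1) ->
  INR b0 <= b <= INR b0 + 1 ->
  Ob N H b = H b0 - relu (H b0 + 2 * (b - INR b0) - 1) + relu (H (S b0) + 2 * (b - INR b0) - 1).
Proof.
  intros Hb HH Hbb. unfold Ob.
  assert (HN : INR b0 + 2 <= INR N) by (replace 2 with (1+1) by lra; rewrite <- Rplus_assoc, <- !S_INR; apply le_INR; lia).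
  assert (Hb0 : 0 <= INR b0) by apply pos_INR.
  replace N with (b0 + S (N - b0 - 1))%nat by lia.
  rewrite sumR_split3.
  rewrite (sumR_ext b0 _ (fun _ => 2)).
  2:{ intros k Hk. specialize (HH k ltac:(lia)).
    assert (INR k + 1 <= INR b0) by (rewrite <- S_INR; apply le_INR; lia).
    rewrite !relu_pos by lra. lra. }
  rewrite sumR_const.
  rewrite (sumR_profile (N - b0 - 1) 0 (fun _ => 0) (relu (H (S b0) + 2 * (b - INR b0) - 1))); try lia.
  - replace (b0 + S (N - b0 - 1))%nat with N by lia. simpl sumR.
    rewrite (relu_pos (2 * b + 1)) by lra. rewrite (relu_neg (2 * b - 2 * INR N + 1)) by lra.
    specialize (HH b0 ltac:(lia)).
    rewrite (relu_pos (H b0 + 2 * (b - INR b0) + 1)) by lra. lra.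
  - replace (b0 + 1)%nat with (S b0) by lia. rewrite S_INR.
    specialize (HH (S b0) ltac:(lia)).
    rewrite (relu_neg (H (S b0) + 2 * (b - (INR b0 + 1)) - 1)) by lra.
    replace (H (S b0) + 2 * (b - (INR b0 + 1)) + 1) with (H (S b0) + 2 * (b - INR b0) - 1) by ring. lra.
  - intros k Hk. specialize (HH (b0 + S k)%nat ltac:(lia)).
    assert (INR b0 + 2 <= INR (b0 + S k)) by (replace 2 with (1+1) by lra; rewrite <- Rplus_assoc, <- !S_INR; apply le_INR; lia).
    rewrite !relu_neg by lra. lra.
Qed.

Lemma Ob_lip N H b0 b b' : (S b0 < N)%nat -> (forall j, (j < N)%nat -> -1 <= H j <= 1) ->
  INR b0 <= b <= INR b0 + 1 -> INR b0 <= b' <= INR b0 + 1 ->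
  Rabs (Ob N H b - Ob N H b') <= 2 * Rabs (b - b').
Proof.
  intros Hb HH H1 H2. rewrite (Ob_cell N H b0 b), (Ob_cell N H b0 b') by auto.
  set (x := b - INR b0). set (y := b' - INR b0).
  replace (b - b') with (x - y) by (unfold x, y; ring).
  clearbody x y. relu_cases; unfold Rabs; repeat destruct Rcase_abs; lra.
Qed.

Lemma sumR_prefix n a A F : (a <= n)%nat -> (forall k, (k < a)%nat -> F k = A k) ->
  (forall k, (a <= k < n)%nat -> F k = 0) -> sumR n F = sumR a A.
Proof.
  intros Ha H1 H2. replace n with (a + (n - a))%nat by lia. rewrite sumR_add.
  rewrite (sumR_ext a F A) by auto. rewrite (sumR_zero (n - a) (fun i => F (a + i)%nat)); [lra|].
  intros; apply H2; lia.
Qed.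

Lemma Ob_ext N H H' b : (forall j, (j < N)%nat -> H j = H' j) -> Ob N H b = Ob N H' b.
Proof. intros E. unfold Ob. rewrite (sumR_ext N _ (fun j => relu (H' j + 2 * (b - INR j) + 1) - relu (H' j + 2 * (b - INR j) - 1))). reflexivity.
  intros j Hj. rewrite E by auto. reflexivity. Qed.

Definition rp (x : R) := clampA 1 x.

Definition Hv (N : nat) (Hs : nat -> nat -> R) (j : nat) (v : R) :=
  Hs j 0%nat + sumR (N - 1) (fun m => (Hs j (S m) - Hs j m) * rp (v - INR (S m) * INR N + 1)).

Definition Ostage (N : nat) (Hs : nat -> nat -> R) (v : R) :=
  Ob N (fun j => Hv N Hs j v) (zz N N v).

Definition zig (N a c : nat) : nat := if Nat.even a then c else (N - 1 - c)%nat.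

Section Stage.
Variable N : nat.
Hypothesis HN : (2 <= N)%nat.
Variable Hs : nat -> nat -> R.
Hypothesis HHs : forall j a, (j < N)%nat -> (a < N)%nat -> -1 <= Hs j a <= 1.

Lemma INR_N1 : 2 <= INR N.
Proof. apply (le_INR 2) in HN. simpl in HN. lra. Qed.

Lemma Hv_seg j a v : (a < N)%nat -> INR a * INR N <= v <= INR a * INR N + INR N - 1 ->
  Hv N Hs j v = Hs j a.
Proof.
  intros Ha Hv0. unfold Hv. pose proof INR_N1.
  rewrite (sumR_prefix (N - 1) a (fun m => Hs j (S m) - Hs j m)); [| lia | |].
  - rewrite sumR_telescope. ring.
  - intros k Hk. unfold rp. rewrite clampA_hi by (try lra; rewrite S_INR;
      assert (INR k + 1 <= INR a) by (rewrite <- S_INR; apply le_INR; lia); nra). ring.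
  - intros k Hk. unfold rp. rewrite clampA_lo by (try lra; rewrite S_INR;
      assert (INR a <= INR k) by (apply le_INR; lia); nra). ring.
Qed.

Lemma Hv_high j v : INR (N - 1) * INR N <= v -> Hv N Hs j v = Hs j (N - 1)%nat.
Proof.
  intros Hv0. unfold Hv. pose proof INR_N1.
  rewrite (sumR_prefix (N - 1) (N - 1) (fun m => Hs j (S m) - Hs j m)); [| lia | |].
  - rewrite sumR_telescope. ring.
  - intros k Hk. unfold rp. rewrite clampA_hi by (try lra; rewrite S_INR;
      assert (INR k + 1 <= INR (N - 1)) by (rewrite <- S_INR; apply le_INR; lia); nra). ring.
  - intros; lia.
Qed.

Lemma Hv_low j v : v <= 0 -> Hv N Hs j v = Hs j 0%nat.
Proof.
  intros Hv0. unfold Hv. pose proof INR_N1.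
  rewrite (sumR_zero (N - 1)); [ring|].
  intros k Hk. unfold rp. rewrite clampA_lo by (try lra; rewrite S_INR;
      assert (0 <= INR k) by apply pos_INR; nra). ring.
Qed.

Lemma Hv_flat j a v : (1 <= a <= N - 1)%nat -> INR a * INR N - 1 <= v <= INR a * INR N ->
  Hv N Hs j v = Hs j (a - 1)%nat + (Hs j a - Hs j (a - 1)%nat) * (v - INR a * INR N + 1).
Proof.
  intros Ha Hv0. unfold Hv. pose proof INR_N1.
  rewrite (sumR_profile (N - 1) (a - 1) (fun m => Hs j (S m) - Hs j m)
     ((Hs j a - Hs j (a - 1)%nat) * (v - INR a * INR N + 1))); [| lia | | |].
  - rewrite sumR_telescope. ring.
  - intros k Hk. unfold rp. rewrite clampA_hi by (try lra; rewrite S_INR;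
      assert (INR k + 1 + 1 <= INR a) by (rewrite <- !S_INR; apply le_INR; lia); nra). ring.
  - unfold rp. replace (S (a - 1)) with a by lia. rewrite clampA_mid. ring.
    lra.
  - intros k Hk. unfold rp. rewrite clampA_lo by (try lra; rewrite S_INR;
      assert (INR a + 1 <= INR k + 1) by (rewrite <- !S_INR; apply le_INR; lia); nra). ring.
Qed.

Lemma zz_int a c : (a < N)%nat -> (c < N)%nat ->
  zz N N (INR (a * N + c)) = INR (zig N a c).
Proof.
  intros Ha Hc. pose proof INR_N1.
  assert (HcR : INR c + 1 <= INR N) by (rewrite <- S_INR; apply le_INR; lia).
  rewrite (zz_seg N N a (INR (a * N + c))) by (try lia; rewrite plus_INR, mult_INR; assert (0 <= INR c) by apply pos_INR; lra).
  rewrite plus_INR, mult_INR. unfold zig, alt. destruct (Nat.even a) eqn:E.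
  - rewrite m1_even by auto. ring.
  - rewrite m1_odd by auto. rewrite !minus_INR by lia. simpl. ring.
Qed.

Lemma zig_lt a c : (c < N)%nat -> (zig N a c < N)%nat.
Proof. unfold zig. destruct (Nat.even a); lia. Qed.

Lemma Ostage_int a c : (a < N)%nat -> (c < N)%nat ->
  Ostage N Hs (INR (a * N + c)) = Hs (zig N a c) a.
Proof.
  intros Ha Hc. unfold Ostage. rewrite zz_int by auto.
  assert (HcR : INR c + 1 <= INR N) by (rewrite <- S_INR; apply le_INR; lia).
  rewrite Ob_val. 
  - apply Hv_seg; auto. rewrite plus_INR, mult_INR. assert (0 <= INR c) by apply pos_INR. lra.
  - apply zig_lt; auto.
  - intros j Hj. rewrite (Hv_seg j a); auto. rewrite plus_INR, mult_INR. assert (0 <= INR c) by apply pos_INR. lra.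
Qed.

Lemma Ostage_low v : v <= 0 -> Ostage N Hs v = Ostage N Hs 0.
Proof.
  intros Hv0. unfold Ostage. rewrite (zz_neg N N v), (zz_neg N N 0) by (lia || lra).
  apply Ob_ext. intros j Hj.
  rewrite Hv_low, Hv_low by lra. reflexivity.
Qed.

Lemma Ostage_high v : INR N * INR N - 1 <= v -> Ostage N Hs v = Ostage N Hs (INR N * INR N - 1).
Proof.
  intros Hv0. pose proof INR_N1. unfold Ostage.
  rewrite (zz_flat N N N v), (zz_flat N N N (INR N * INR N - 1)) by (lia || lra).
  apply Ob_ext. intros j Hj.
  assert (E : INR (N - 1) = INR N - 1) by (rewrite minus_INR by lia; simpl; ring).
  rewrite !Hv_high; auto; rewrite E; nra.
Qed.

Lemma alt_zig a : (INR N - 1) * alt a = INR (zig N a 0).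
Proof. unfold alt, zig. destruct (Nat.even a); simpl. ring. rewrite !minus_INR by lia. simpl. ring. Qed.

Lemma Ostage_cell : cell_lip (Ostage N Hs) 2.
Proof.
  intros n x y Hx Hy. pose proof INR_N1.
  destruct (Z_lt_le_dec n 0) as [Hn|Hn].
  { apply IZR_lt in Hn. assert (IZR n <= -1).
    { apply IZR_le. apply Zlt_succ_le. simpl. apply lt_IZR. exact Hn. }
    rewrite (Ostage_low x), (Ostage_low y) by lra. replace (_ - _) with 0 by ring. rewrite Rabs_R0.
    assert (0 <= Rabs (x - y)) by apply Rabs_pos. lra. }
  destruct (Rle_dec (INR N * INR N - 1) (IZR n)) as [Hh|Hh].
  { rewrite (Ostage_high x), (Ostage_high y) by lra. replace (_ - _) with 0 by ring. rewrite Rabs_R0.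
    assert (0 <= Rabs (x - y)) by apply Rabs_pos. lra. }
  set (nn := Z.to_nat n). assert (En : IZR n = INR nn) by (unfold nn; rewrite INR_IZR_INZ, Z2Nat.id; auto).
  rewrite En in Hx, Hy, Hh.
  assert (Hnn : (nn + 2 <= N * N)%nat).
  { assert (INR (nn + 1) < INR (N * N)) by (rewrite plus_INR, mult_INR; simpl; lra).
    apply INR_lt in H0. lia. }
  set (a := (nn / N)%nat). set (c := (nn mod N)%nat).
  assert (Hnac : nn = (a * N + c)%nat) by (unfold a, c; rewrite (Nat.div_mod nn N) at 1 by lia; lia).
  assert (Hc : (c < N)%nat) by (unfold c; apply Nat.mod_upper_bound; lia).
  assert (Ha : (a < N)%nat).
  { unfold a. apply Nat.Div0.div_lt_upper_bound; lia. }
  rewrite Hnac in Hx, Hy. rewrite plus_INR, mult_INR in Hx, Hy.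
  assert (HcR : INR c + 1 <= INR N) by (rewrite <- S_INR; apply le_INR; lia).
  assert (Hc0 : 0 <= INR c) by apply pos_INR.
  destruct (Nat.eq_dec c (N - 1)) as [Ec|Ec].
  -
    assert (Ha1 : (1 <= S a <= N - 1)%nat).
    { split; [lia|]. destruct (Nat.eq_dec a (N - 1)); [|lia]. exfalso. subst a. nia. }
    assert (EcR : INR c = INR N - 1) by (rewrite Ec, minus_INR by lia; simpl; ring).
    assert (HSa : INR (S a) = INR a + 1) by apply S_INR.
    unfold Ostage.
    rewrite (zz_flat N N (S a) x), (zz_flat N N (S a) y) by (try lia; intros; rewrite HSa; nra).
    rewrite alt_zig.
    assert (Hb0 : (zig N (S a) 0 < N)%nat) by (apply zig_lt; lia).
    assert (Hint : forall z, INR (S a) * INR N - 1 <= z <= INR (S a) * INR N ->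
       Ob N (fun j => Hv N Hs j z) (INR (zig N (S a) 0)) =
       Hs (zig N (S a) 0) a + (Hs (zig N (S a) 0) (S a) - Hs (zig N (S a) 0) a) * (z - INR (S a) * INR N + 1)).
    { intros z Hz. rewrite Ob_val; auto.
      - rewrite (Hv_flat _ (S a)) by (auto; lra). replace (S a - 1)%nat with a by lia. reflexivity.
      - intros j Hj. rewrite (Hv_flat _ (S a)) by (auto; lra). replace (S a - 1)%nat with a by lia.
        pose proof (HHs j a Hj ltac:(lia)). pose proof (HHs j (S a) Hj ltac:(lia)).
        assert (0 <= z - INR (S a) * INR N + 1 <= 1) by lra. nra. }
    rewrite !Hint by (rewrite HSa; nra).
    pose proof (HHs (zig N (S a) 0) a Hb0 ltac:(lia)). pose proof (HHs (zig N (S a) 0) (S a) Hb0 ltac:(lia)).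
    set (D := Hs (zig N (S a) 0) (S a) - Hs (zig N (S a) 0) a).
    replace (_ - _) with (D * (x - y)) by ring. rewrite Rabs_mult.
    apply Rmult_le_compat_r; [apply Rabs_pos|]. unfold D. unfold Rabs; destruct Rcase_abs; lra.
  -
    assert (Hseg : forall z, INR a * INR N + INR c <= z <= INR a * INR N + INR c + 1 ->
      Ostage N Hs z = Ob N (fun j => Hs j a) ((INR N - 1) * alt a + (-1) ^ a * (z - INR a * INR N))).
    { intros z Hz. unfold Ostage. rewrite (zz_seg N N a z) by (try lia; assert (INR c + 2 <= INR N) by
         (replace 2 with (1+1) by ring; rewrite <- Rplus_assoc, <- !S_INR; apply le_INR; lia); lra).
      apply Ob_ext. intros j Hj. apply Hv_seg; auto. assert (INR c + 2 <= INR N) by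
         (replace 2 with (1+1) by ring; rewrite <- Rplus_assoc, <- !S_INR; apply le_INR; lia). lra. }
    rewrite (Hseg x), (Hseg y) by lra.
    assert (HH' : forall j, (j < N)%nat -> -1 <= Hs j a <= 1) by (intros; apply HHs; auto).
    unfold alt. destruct (Nat.even a) eqn:E.
    + rewrite m1_even by auto.
      replace (x - y) with (((INR N - 1) * 0 + 1 * (x - INR a * INR N)) - ((INR N - 1) * 0 + 1 * (y - INR a * INR N))) by ring.
      apply (Ob_lip N (fun j => Hs j a) c); auto; try lia; lra.
    + rewrite m1_odd by auto.
      replace (x - y) with (- (((INR N - 1) * 1 + -1 * (x - INR a * INR N)) - ((INR N - 1) * 1 + -1 * (y - INR a * INR N)))) by ring.
      rewrite Rabs_Ropp.
      assert (EE : INR (N - 2 - c) = INR N - 2 - INR c) by (rewrite !minus_INR by lia; simpl; ring).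
      apply (Ob_lip N (fun j => Hs j a) (N - 2 - c)); auto; try lia; rewrite EE; lra.
Qed.
End Stage.

Lemma zig_invol N a c : (c < N)%nat -> zig N a (zig N a c) = c.
Proof. unfold zig. destruct (Nat.even a); lia. Qed.

Section Theta.
Variable N : nat.
Hypothesis HN : (2 <= N)%nat.
Variable NS : nat.
Variable Th : nat -> R.
Hypothesis HTh : forall u, 0 <= Th u <= 1.

Definition Zs := (N * N - 1)%nat.
Definition Hst (k : nat) (j a : nat) := Th (k * Zs + (a * N + zig N a j)) - Th (k * Zs).
Definition thf (u : R) := Th 0%nat + sumR NS (fun k => Ostage N (Hst k) (u - INR (k * Zs))).

Lemma Hst_range k j a : -1 <= Hst k j a <= 1.
Proof. unfold Hst. pose proof (HTh (k * Zs + (a * N + zig N a j))). pose proof (HTh (k * Zs)). lra. Qed.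

Lemma Zs_INR : INR Zs = INR N * INR N - 1.
Proof. unfold Zs. rewrite minus_INR, mult_INR by nia. simpl. ring. Qed.

Lemma Ostage_Hst_int k a c : (a < N)%nat -> (c < N)%nat ->
  Ostage N (Hst k) (INR (a * N + c)) = Th (k * Zs + (a * N + c)) - Th (k * Zs).
Proof. intros Ha Hc. rewrite Ostage_int; auto. unfold Hst. rewrite zig_invol; auto.
  intros; apply Hst_range. Qed.

Lemma Ostage_Hst_lo k v : v <= 0 -> Ostage N (Hst k) v = 0.
Proof. intros Hv. rewrite Ostage_low by first [lra | auto | intros; apply Hst_range].
  assert (E : Ostage N (Hst k) 0 = Ostage N (Hst k) (INR (0 * N + 0))) by (f_equal; simpl; ring).
  rewrite E, Ostage_Hst_int by lia.
  replace (k * Zs + (0 * N + 0))%nat with (k * Zs)%nat by lia. ring. Qed.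

Lemma Ostage_Hst_hi k v : INR Zs <= v -> Ostage N (Hst k) v = Th (S k * Zs) - Th (k * Zs).
Proof. intros Hv. rewrite Zs_INR in Hv. rewrite Ostage_high by first [lra | auto | intros; apply Hst_range].
  replace (INR N * INR N - 1) with (INR ((N - 1) * N + (N - 1))).
  - rewrite Ostage_Hst_int by lia. f_equal. f_equal. unfold Zs. nia.
  - rewrite plus_INR, mult_INR, minus_INR by lia. simpl. ring.
Qed.

Lemma thf_int u : (u <= NS * Zs)%nat -> (1 <= NS)%nat -> thf (INR u) = Th u.
Proof.
  intros Hu HS. unfold thf.
  assert (HZ : (1 <= Zs)%nat) by (unfold Zs; nia).
  set (k0 := Nat.min (u / Zs) (NS - 1)).
  assert (Hk0 : (k0 < NS)%nat) by (unfold k0; lia).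
  assert (Hk0a : (k0 * Zs <= u)%nat).
  { unfold k0. assert (Nat.min (u / Zs) (NS - 1) <= u / Zs)%nat by lia.
    assert (u / Zs * Zs <= u)%nat by (rewrite Nat.mul_comm; apply Nat.Div0.mul_div_le).
    nia. }
  assert (Hk0b : (u <= k0 * Zs + Zs)%nat).
  { unfold k0. destruct (Nat.le_gt_cases (u / Zs) (NS - 1)).
    - rewrite Nat.min_l by lia. pose proof (Nat.div_mod u Zs ltac:(lia)). pose proof (Nat.mod_upper_bound u Zs ltac:(lia)). nia.
    - rewrite Nat.min_r by lia. replace (NS - 1 + 1)%nat with NS by lia. nia. }
  set (loc := (u - k0 * Zs)%nat).
  assert (Hloc : (loc <= (N - 1) * N + (N - 1))%nat) by (unfold loc, Zs in *; nia).
  set (a := (loc / N)%nat). set (c := (loc mod N)%nat).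
  assert (Hlac : loc = (a * N + c)%nat) by (unfold a, c; rewrite (Nat.div_mod loc N) at 1 by lia; lia).
  assert (Hc : (c < N)%nat) by (unfold c; apply Nat.mod_upper_bound; lia).
  assert (Ha : (a < N)%nat) by (unfold a; apply Nat.Div0.div_lt_upper_bound; nia).
  rewrite (sumR_profile NS k0 (fun k => Th (S k * Zs) - Th (k * Zs)) (Th u - Th (k0 * Zs))); auto.
  - rewrite (sumR_telescope k0 (fun k => Th (k * Zs))). simpl. ring.
  - intros k Hk. apply Ostage_Hst_hi. rewrite <- minus_INR by nia. apply le_INR. nia.
  - replace (INR u - INR (k0 * Zs)) with (INR (a * N + c)).
    + rewrite Ostage_Hst_int by auto. rewrite <- Hlac. unfold loc. f_equal. f_equal. lia.
    + rewrite <- Hlac. unfold loc. rewrite minus_INR by lia. reflexivity.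
  - intros k Hk. apply Ostage_Hst_lo. assert (INR u <= INR (k * Zs)) by (apply le_INR; nia). lra.
Qed.

Lemma thf_lip x y : Rabs (thf x - thf y) <= 2 * Rabs (x - y).
Proof.
  apply lip_cells; [lra|]. intros n a b Ha Hb. unfold thf.
  replace (Th 0%nat + _ - _) with (sumR NS (fun k => Ostage N (Hst k) (a - INR (k * Zs)) - Ostage N (Hst k) (b - INR (k * Zs)))) by (rewrite sumR_minus; ring).
  eapply Rle_trans; [apply sumR_abs|].
  assert (HZ : (1 <= Zs)%nat) by (unfold Zs; nia).
  destruct (Z_lt_le_dec n 0) as [Hn|Hn].
  - rewrite sumR_zero. apply Rmult_le_pos; [lra|apply Rabs_pos].
    intros k Hk. assert (IZR n <= -1) by (apply IZR_le; lia).
    assert (0 <= INR (k * Zs)) by apply pos_INR.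
    rewrite !Ostage_Hst_lo by lra. rewrite Rminus_0_r, Rabs_R0. reflexivity.
  - set (nn := Z.to_nat n). assert (En : IZR n = INR nn) by (unfold nn; rewrite INR_IZR_INZ, Z2Nat.id; auto).
    rewrite En in Ha, Hb. set (k0 := (nn / Zs)%nat).
    eapply Rle_trans.
    + apply (sumR_le NS _ (fun k => if Nat.eqb k k0 then 2 * Rabs (a - b) else 0)).
      intros k Hk. destruct (Nat.eqb_spec k k0) as [E|E].
      * replace (a - b) with ((a - INR (k * Zs)) - (b - INR (k * Zs))) by ring.
        apply (Ostage_cell N HN (Hst k) (fun j a _ _ => Hst_range k j a) (n - Z.of_nat (k * Zs))%Z);
          rewrite minus_IZR, En, <- INR_IZR_INZ; lra.
      * assert (Hdm : (nn = k0 * Zs + nn mod Zs)%nat) by (unfold k0; rewrite (Nat.div_mod nn Zs) at 1 by lia; lia).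
        pose proof (Nat.mod_upper_bound nn Zs ltac:(lia)).
        destruct (Nat.lt_ge_cases k k0).
        -- assert (INR (k * Zs) + INR Zs <= INR nn) by (rewrite <- plus_INR; apply le_INR; nia).
           rewrite !Ostage_Hst_hi by lra. rewrite Rminus_diag, Rabs_R0. lra.
        -- assert (INR nn + 1 <= INR (k * Zs)) by (rewrite <- S_INR; apply le_INR; nia).
           rewrite !Ostage_Hst_lo by lra. rewrite Rminus_diag, Rabs_R0. lra.
    + apply sumR_pt_le. assert (0 <= Rabs (a - b)) by apply Rabs_pos. lra.
Qed.
End Theta.

Definition Fx (x : R) := 3 * x - 2 * clampA 1 (3 * x - 1).
Definition bitf (x : R) := clampA 1 (3 * x - 1).
Fixpoint xs (k : nat) (x : R) : R := match k with O => x | S k' => Fx (xs k' x) end.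

Lemma Fx_lip x y : Rabs (Fx x - Fx y) <= 3 * Rabs (x - y).
Proof. unfold Fx, clampA. relu_cases; unfold Rabs; repeat destruct Rcase_abs; lra. Qed.

Lemma xs_lip k x y : Rabs (xs k x - xs k y) <= 3 ^ k * Rabs (x - y).
Proof. induction k; simpl. lra. eapply Rle_trans; [apply Fx_lip|]. lra. Qed.

Lemma bit_lip k x y : Rabs (bitf (xs k x) - bitf (xs k y)) <= 3 ^ (S k) * Rabs (x - y).
Proof. unfold bitf. eapply Rle_trans; [apply clampA_lip; lra|].
  replace (3 * xs k x - 1 - (3 * xs k y - 1)) with (3 * (xs k x - xs k y)) by ring.
  rewrite Rabs_mult, Rabs_right by lra. simpl. pose proof (xs_lip k x y). lra. Qed.

Lemma bit_range x : 0 <= bitf x <= 1.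
Proof. unfold bitf. apply clampA_range. lra. Qed.

Definition b2r (b : bool) : R := if b then 1 else 0.

Fixpoint tlv (be : nat -> bool) (k n : nat) : R :=
  match n with O => 0 | S n' => (2 * b2r (be k) + tlv be (S k) n') / 3 end.

Lemma tl_range be n : forall k, 0 <= tlv be k n < 1.
Proof. induction n; intros k; simpl. lra. specialize (IHn (S k)). unfold b2r. destruct (be k); lra. Qed.

Lemma tl_step be k n : Fx (tlv be k (S n)) = tlv be (S k) n /\ bitf (tlv be k (S n)) = b2r (be k).
Proof. simpl. pose proof (tl_range be n (S k)). unfold Fx, bitf, b2r. destruct (be k).
  - rewrite clampA_hi by lra. split; lra.
  - rewrite clampA_lo by lra. split; lra. Qed.

Lemma xs_tl be M k : (k <= M)%nat -> xs k (tlv be 0 M) = tlv be k (M - k).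
Proof. induction k; intros H. simpl. rewrite Nat.sub_0_r. reflexivity.
  simpl. rewrite IHk by lia. replace (M - k)%nat with (S (M - S k)) by lia. apply tl_step. Qed.

Lemma bit_tl be M k : (k < M)%nat -> bitf (xs k (tlv be 0 M)) = b2r (be k).
Proof. intros H. rewrite xs_tl by lia. replace (M - k)%nat with (S (M - S k)) by lia. apply tl_step. Qed.

Definition gate (b c : R) := clampA 1 (b - c) - clampA 1 (- c).

Lemma gate_0 b : 0 <= b <= 1 -> gate b 0 = b.
Proof. intros. unfold gate. rewrite clampA_mid by lra. rewrite clampA_lo by lra. ring. Qed.
Lemma gate_1 b : 0 <= b <= 1 -> gate b 1 = 0.
Proof. intros. unfold gate. rewrite clampA_lo by lra. rewrite clampA_lo by lra. ring. Qed.
Lemma gate_m1 b : 0 <= b <= 1 -> gate b (-1) = 0.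
Proof. intros. unfold gate. rewrite clampA_hi by lra. rewrite clampA_hi by lra. ring. Qed.
Lemma gate_lip_b b b' c : Rabs (gate b c - gate b' c) <= Rabs (b - b').
Proof. unfold gate. replace (_ - _) with (clampA 1 (b - c) - clampA 1 (b' - c)) by ring.
  eapply Rle_trans; [apply clampA_lip; lra|]. right. f_equal. ring. Qed.
Lemma gate_lip_c b c c' : Rabs (gate b c - gate b c') <= 2 * Rabs (c - c').
Proof. unfold gate.
  pose proof (clampA_lip 1 (b - c) (b - c') ltac:(lra)). pose proof (clampA_lip 1 (- c) (- c') ltac:(lra)).
  replace (b - c - (b - c')) with (- (c - c')) in H by ring. replace (- c - - c') with (- (c - c')) in H0 by ring.
  rewrite Rabs_Ropp in H, H0. revert H H0. generalize (clampA 1 (b - c)) (clampA 1 (b - c')) (clampA 1 (- c)) (clampA 1 (- c')).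
  intros. unfold Rabs in *; repeat destruct Rcase_abs; lra. Qed.

Lemma gate_nonneg b c : 0 <= b -> 0 <= gate b c.
Proof. intros. unfold gate. pose proof (clampA_mono 1 (- c) (b - c) ltac:(lra) ltac:(lra)). lra. Qed.

Lemma pow3_ge M : 3 <= 3 ^ (S M).
Proof. induction M. simpl; lra. change (3 ^ S (S M)) with (3 * 3 ^ (S M)). lra. Qed.

Lemma pow3_bound M : (1 <= M)%nat -> 4 * INR M <= 3 ^ (S M).
Proof. intros _. induction M. simpl; lra. rewrite S_INR. change (3 ^ S (S M)) with (3 * 3 ^ (S M)).
  pose proof (pow3_ge M). lra. Qed.

Section Unit.
Variable N : nat.
Hypothesis HN : (2 <= N)%nat.
Variable NS : nat.
Hypothesis HNS : (1 <= NS)%nat.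
Variable M : nat.
Hypothesis HM : (1 <= M)%nat.
Variable be : nat -> bool.

Definition Kseg := (NS * Zs N + 1)%nat.
Definition idx (k u : nat) := (k * Kseg + zig Kseg k u)%nat.
Definition Th (u : nat) : R := tlv (fun k => be (idx k u)) 0 M.
Definition uf (t : R) := zz Kseg M t.
Definition thu (u : R) := thf N NS Th u.
Definition rampj (j : nat) (t : R) := rp (t - INR j * INR Kseg + 1).
Definition cd (k : nat) (t : R) := rampj k t + rampj (S k) t - 1.
Definition gu (t : R) := sumR M (fun k => gate (bitf (xs k (thu (uf t)))) (cd k t)).

Lemma Kseg_ge1 : (1 <= Kseg)%nat.
Proof. unfold Kseg. lia. Qed.

Lemma Th_range u : 0 <= Th u <= 1.
Proof. unfold Th. pose proof (tl_range (fun k => be (idx k u)) M 0). lra. Qed.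

Lemma zz_int_gen P cnt a c : (1 <= P)%nat -> (a < cnt)%nat -> (c < P)%nat ->
  zz P cnt (INR (a * P + c)) = INR (zig P a c).
Proof.
  intros HP Ha Hc.
  assert (HcR : INR c + 1 <= INR P) by (rewrite <- S_INR; apply le_INR; lia).
  rewrite (zz_seg P cnt a (INR (a * P + c))) by (try lia; rewrite plus_INR, mult_INR; assert (0 <= INR c) by apply pos_INR; lra).
  rewrite plus_INR, mult_INR. unfold zig, alt. destruct (Nat.even a) eqn:E.
  - rewrite m1_even by auto. ring.
  - rewrite m1_odd by auto. rewrite !minus_INR by lia. simpl. ring.
Qed.

Lemma rampj_int j i : (1 <= j)%nat -> rampj j (INR i) = if Nat.leb (j * Kseg) i then 1 else 0.
Proof.
  intros Hj. unfold rampj, rp. destruct (Nat.leb_spec (j * Kseg) i) as [H|H].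
  - apply le_INR in H. rewrite mult_INR in H. apply clampA_hi; lra.
  - assert (INR (i + 1) <= INR (j * Kseg)) by (apply le_INR; lia). rewrite plus_INR, mult_INR in H0. simpl in H0.
    apply clampA_lo; lra.
Qed.

Lemma rampj0 t : 0 <= t -> rampj 0 t = 1.
Proof. intros. unfold rampj, rp. apply clampA_hi; simpl; lra. Qed.

Lemma gu_int i : (i < M * Kseg)%nat -> gu (INR i) = b2r (be i).
Proof.
  intros Hi. pose proof Kseg_ge1.
  set (r := (i / Kseg)%nat). set (j := (i mod Kseg)%nat).
  assert (Hij : i = (r * Kseg + j)%nat) by (unfold r, j; rewrite (Nat.div_mod i Kseg) at 1 by lia; lia).
  assert (Hj : (j < Kseg)%nat) by (unfold j; apply Nat.mod_upper_bound; lia).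
  assert (Hr : (r < M)%nat) by (unfold r; apply Nat.Div0.div_lt_upper_bound; nia).
  assert (Hu : uf (INR i) = INR (zig Kseg r j)) by (unfold uf; rewrite Hij; apply zz_int_gen; auto).
  assert (Hth : thu (uf (INR i)) = Th (zig Kseg r j)).
  { rewrite Hu. unfold thu. apply thf_int; [exact HN | intros; apply Th_range | | exact HNS].
    unfold zig. unfold Kseg in *. destruct (Nat.even r); lia. }
  assert (Hcd : forall k, cd k (INR i) = if Nat.ltb k r then 1 else if Nat.eqb k r then 0 else -1).
  { intros k. unfold cd.
    assert (E : forall j', rampj j' (INR i) = if Nat.leb j' r then 1 else 0).
    { intros j'. destruct j'. apply rampj0, pos_INR. rewrite rampj_int by lia.
      destruct (Nat.leb_spec (S j' * Kseg) i), (Nat.leb_spec (S j') r); auto; nia. }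
    rewrite !E. destruct (Nat.leb_spec k r), (Nat.leb_spec (S k) r), (Nat.ltb_spec k r), (Nat.eqb_spec k r); try lia; ring. }
  unfold gu. rewrite (sumR_profile M r (fun _ => 0) (b2r (be i))); auto.
  - rewrite sumR_const. ring.
  - intros k Hk. rewrite Hcd, Hth. destruct (Nat.ltb_spec k r); [|lia]. apply gate_1, bit_range.
  - rewrite Hcd, Hth. destruct (Nat.ltb_spec r r); [lia|]. rewrite Nat.eqb_refl.
    rewrite gate_0 by apply bit_range. unfold Th. rewrite bit_tl by auto. f_equal. f_equal.
    unfold idx. rewrite zig_invol by auto. lia.
  - intros k Hk. rewrite Hcd, Hth. destruct (Nat.ltb_spec k r); [lia|]. destruct (Nat.eqb_spec k r); [lia|].
    apply gate_m1, bit_range.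
Qed.

Lemma rampj_lip j x y : Rabs (rampj j x - rampj j y) <= Rabs (x - y).
Proof. unfold rampj, rp. eapply Rle_trans; [apply clampA_lip; lra|]. right; f_equal; ring. Qed.

Lemma gu_nonfold (nn : nat) x y : INR nn <= x <= INR nn + 1 -> INR nn <= y <= INR nn + 1 ->
  (forall j, (1 <= j <= M)%nat -> S nn <> (j * Kseg)%nat) ->
  sumR M (fun k => Rabs (gate (bitf (xs k (thu (uf x)))) (cd k x) - gate (bitf (xs k (thu (uf y)))) (cd k y)))
  <= 3 ^ (S M) * Rabs (x - y).
Proof.
  intros Hx Hy Hnf. pose proof Kseg_ge1. pose proof (pos_INR nn).
  assert (Hr : forall j, (j <= M)%nat -> rampj j x = rampj j y).
  { intros j Hj. destruct j. rewrite !rampj0 by lra. reflexivity.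
    specialize (Hnf (S j) ltac:(lia)).
    destruct (Nat.lt_ge_cases (S nn) (S j * Kseg)) as [Hl|Hl].
    - assert (INR (S nn) + 1 <= INR (S j * Kseg)) by (rewrite <- S_INR; apply le_INR; lia).
      rewrite S_INR, mult_INR in H1. unfold rampj, rp. rewrite !clampA_lo by lra. reflexivity.
    - assert (INR (S j * Kseg) <= INR nn) by (apply le_INR; lia). rewrite mult_INR in H1.
      unfold rampj, rp. rewrite !clampA_hi by lra. reflexivity. }
  eapply Rle_trans.
  - apply (sumR_le M _ (fun k => 2 * 3 ^ (S k) * Rabs (x - y))). intros k Hk.
    unfold cd. rewrite (Hr k), (Hr (S k)) by lia.
    eapply Rle_trans; [apply gate_lip_b|]. eapply Rle_trans; [apply bit_lip|].
    pose proof (thf_lip N HN NS Th Th_range (uf x) (uf y)). fold (thu (uf x)) (thu (uf y)) in H1.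
    pose proof (zz_lip Kseg M x y Kseg_ge1). fold (uf x) (uf y) in H2.
    assert (0 <= 3 ^ (S k)) by (apply pow_le; lra). nra.
  - rewrite (sumR_ext M (fun k => (2 * 3 ^ (S k)) * Rabs (x - y)) (fun k => Rabs (x - y) * (2 * 3 ^ (S k)))) by (intros; ring).
    rewrite sumR_scal, sumR_geom3. pose proof (Rabs_pos (x - y)). nra.
Qed.

Lemma gu_cell : cell_lip (fun t => gu (relu t)) (3 ^ (S M)).
Proof.
  intros n x y Hx Hy. pose proof Kseg_ge1.
  assert (H3 : 0 <= 3 ^ (S M)) by (apply pow_le; lra).
  destruct (Z_lt_le_dec n 0) as [Hn|Hn].
  { assert (IZR n <= -1) by (apply IZR_le; lia). rewrite !relu_neg by lra.
    rewrite Rminus_diag, Rabs_R0. apply Rmult_le_pos; auto; apply Rabs_pos. }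
  set (nn := Z.to_nat n). assert (En : IZR n = INR nn) by (unfold nn; rewrite INR_IZR_INZ, Z2Nat.id; auto).
  rewrite En in Hx, Hy. pose proof (pos_INR nn).
  rewrite !relu_pos by lra.
  unfold gu. rewrite <- sumR_minus. eapply Rle_trans; [apply sumR_abs|].
  destruct (Nat.eq_dec ((S nn) mod Kseg) 0) as [Hm|Hm];
  [destruct (Nat.le_gt_cases (S nn / Kseg) M) as [Hq|Hq]|].
  -
    set (j := (S nn / Kseg)%nat).
    assert (Hsn : (S nn = j * Kseg)%nat) by (unfold j; rewrite (Nat.div_mod (S nn) Kseg) at 1 by lia; lia).
    assert (Hj1 : (1 <= j)%nat) by nia.
    assert (HjR : INR j * INR Kseg = INR nn + 1) by (rewrite <- mult_INR, <- Hsn, S_INR; ring).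
    assert (Huf : uf x = uf y).
    { unfold uf. rewrite (zz_flat Kseg M j x), (zz_flat Kseg M j y); auto; intros; lra. }
    rewrite Huf.
    eapply Rle_trans.
    + apply (sumR_le M _ (fun k => 4 * Rabs (x - y))). intros k Hk.
      eapply Rle_trans; [apply gate_lip_c|]. unfold cd.
      pose proof (rampj_lip k x y). pose proof (rampj_lip (S k) x y).
      revert H1 H2. generalize (rampj k x) (rampj k y) (rampj (S k) x) (rampj (S k) y). intros.
      unfold Rabs in *; repeat destruct Rcase_abs; lra.
    + rewrite sumR_const. pose proof (pow3_bound M HM). pose proof (Rabs_pos (x - y)). nra.
  - apply (gu_nonfold nn); auto. intros j' Hj' E.
    assert (S nn = (S nn / Kseg) * Kseg)%nat by (rewrite (Nat.div_mod (S nn) Kseg) at 1 by lia; lia). nia.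
  - apply (gu_nonfold nn); auto. intros j' Hj' E. apply Hm. rewrite E. apply Nat.Div0.mod_mul.
Qed.
End Unit.

Definition dot (n : nat) (c s : nat -> R) := sumR n (fun o => c o * s o).
Definition pt (k : nat) (a : R) : nat -> R := fun o => if Nat.eqb o k then a else 0.
Definition blk (off len : nat) (f : nat -> R) : nat -> R :=
  fun o => if andb (Nat.leb off o) (Nat.ltb o (off + len)) then f (o - off)%nat else 0.
Definition cadd (c1 c2 : nat -> R) : nat -> R := fun o => c1 o + c2 o.
Definition csc (a : R) (c : nat -> R) : nat -> R := fun o => a * c o.
Definition c0 : nat -> R := fun _ => 0.

Lemma dot_pt n k a s : (k < n)%nat -> dot n (pt k a) s = a * s k.
Proof. intros H. unfold dot, pt.
  rewrite (sumR_ext n _ (fun o => if Nat.eqb o k then a * s k else 0)).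
  - apply sumR_pt; auto.
  - intros i Hi. destruct (Nat.eqb_spec i k); subst; ring. Qed.

Lemma dot_add n c1 c2 s : dot n (cadd c1 c2) s = dot n c1 s + dot n c2 s.
Proof. unfold dot, cadd. rewrite <- sumR_plus. apply sumR_ext. intros; ring. Qed.

Lemma dot_csc n a c s : dot n (csc a c) s = a * dot n c s.
Proof. unfold dot, csc. rewrite <- sumR_scal. apply sumR_ext. intros; ring. Qed.

Lemma dot_c0 n s : dot n c0 s = 0.
Proof. unfold dot, c0. apply sumR_zero. intros; ring. Qed.

Lemma dot_blk n off len f s : (off + len <= n)%nat ->
  dot n (blk off len f) s = sumR len (fun m => f m * s (off + m)%nat).
Proof.
  intros H. unfold dot, blk. replace n with (off + (len + (n - off - len)))%nat by lia.
  rewrite !sumR_add. rewrite sumR_zero.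
  2:{ intros i Hi. destruct (Nat.leb_spec off i); [lia|]. simpl. ring. }
  rewrite (sumR_zero (n - off - len)).
  2:{ intros i Hi. destruct (Nat.leb_spec off (off + (len + i))); [|lia].
      destruct (Nat.ltb_spec (off + (len + i)) (off + len)); [lia|]. simpl. ring. }
  rewrite (sumR_ext len _ (fun m => f m * s (off + m)%nat)). ring.
  intros i Hi. destruct (Nat.leb_spec off (off + i)); [|lia].
  destruct (Nat.ltb_spec (off + i) (off + len)); [|lia]. simpl. f_equal. f_equal. lia.
Qed.

Lemma dot_ext n c s s' : (forall o, (o < n)%nat -> s o = s' o) -> dot n c s = dot n c s'.
Proof. intros H. unfold dot. apply sumR_ext. intros. rewrite H; auto. Qed.

Lemma relu_shift x c : 0 <= c -> relu (relu x - c) = relu (x - c).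
Proof. intros. unfold relu, Rmax. repeat destruct Rle_dec; lra. Qed.

Definition step (T : affine) (x : nat -> R) : nat -> R := fun i => relu (eval_affine T x i).

Lemma eval_net_app Ls rest x : rest <> [] ->
  eval_net (Ls ++ rest) x = eval_net rest (fold_left (fun v T => step T v) Ls x).
Proof.
  revert x. induction Ls as [|T Ls IH]; intros x Hr; simpl. reflexivity.
  rewrite <- IH by auto. destruct (Ls ++ rest) eqn:E.
  - destruct Ls; destruct rest; simpl in E; try discriminate. congruence.
  - reflexivity.
Qed.

Inductive LK := KF (k : nat) | KA (k : nat) | KB (k : nat) | KE (k : nat) | KG | KZ | KP.

Definition kind (M NS l : nat) : LK :=
  if Nat.ltb l M then KF l
  else if Nat.ltb l (M + 2 * NS) then
    (if Nat.even (l - M) then KA ((l - M) / 2) else KB ((l - M) / 2))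
  else if Nat.ltb l (2 * M + 2 * NS) then KE (l - M - 2 * NS)
  else if Nat.eqb l (2 * M + 2 * NS) then KG
  else if Nat.eqb l (2 * M + 2 * NS + 1) then KZ else KP.

Definition row := ((nat -> R) * R)%type.

Section Rows.
Variables N NS M : nat.
Variable be : nat -> bool.
Variable wt : R.

Let K := Kseg N NS.
Let Z := Zs N.
Let Thu := Th N NS M be.
Definition Dl (k j m : nat) := Hst N Thu k j (S m) - Hst N Thu k j m.

Definition r_zero : row := (c0, 0).
Definition r_pass (k : nat) : row := (pt k 1, 0).
Definition gateC := cadd (pt 10 1) (cadd (pt 11 (-1)) (cadd (pt 12 (-1)) (pt 13 1))).
Definition r_accg : row := (cadd (pt 1 1) (csc wt gateC), 0).
Definition Orow := cadd (blk 6 N (fun _ => 1)) (cadd (blk (6 + N) N (fun _ => -1))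
                     (cadd (pt (6 + 2 * N) (-1)) (pt (7 + 2 * N) 1))).
Definition bbC := cadd (blk 6 N (fun m => 2 * (-1) ^ m)) (blk (6 + N) N (fun m => -2 * (-1) ^ m)).
Definition puC (k : nat) := cadd (pt 2 1) (cadd (pt 3 (-1)) (csc ((-1) ^ (k - 1)) (cadd (pt 4 1) (pt 5 (-1))))).
Definition uC1 := cadd (pt 2 1) (pt 3 (-1)).
Definition thC1 := cadd (pt 4 1) (cadd (pt 5 (-1)) Orow).
Definition HC (k j : nat) := cadd (blk 6 N (fun m => if Nat.eqb m 0 then 0 else - Dl k j (m - 1)))
                               (blk (6 + N) N (fun m => if Nat.ltb m (N - 1) then Dl k j m else 0)).
Definition xC1 := cadd (csc 3 uC1) (csc (-2) (cadd (pt 4 1) (pt 5 (-1)))).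
Definition bC := cadd (pt 4 1) (pt 5 (-1)).
Definition cdC := cadd (cadd (pt 6 1) (pt 7 (-1))) (cadd (pt 8 1) (pt 9 (-1))).
Definition gaterow (o : nat) : row :=
  if Nat.eqb o 10 then (cadd bC (csc (-1) cdC), 1)
  else if Nat.eqb o 11 then (cadd bC (csc (-1) cdC), 0)
  else if Nat.eqb o 12 then (csc (-1) cdC, 1)
  else (csc (-1) cdC, 0).
Definition rneg (r : row) : row := (csc (-1) (fst r), - snd r).

Definition rowF (k o : nat) : row :=
  if Nat.eqb o 0 then r_pass 0
  else if Nat.eqb o 1 then r_pass 1
  else if Nat.eqb o 2 then (if Nat.eqb k 0 then r_zero else (puC k, 0))
  else if Nat.eqb o 3 then (if Nat.eqb k 0 then r_zero else rneg (puC k, 0))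
  else if Nat.eqb o 4 then (pt 0 1, - (INR k * INR K))
  else if Nat.eqb o 5 then (pt 0 1, - (INR k * INR K) - (INR K - 1))
  else r_zero.

Definition uCk (k : nat) := if Nat.eqb k 0 then puC M else uC1.
Definition thCk (k : nat) := if Nat.eqb k 0 then c0 else thC1.

Definition rowA (k o : nat) : row :=
  if Nat.eqb o 0 then r_pass 0
  else if Nat.eqb o 1 then r_pass 1
  else if Nat.eqb o 2 then (uCk k, 0)
  else if Nat.eqb o 3 then rneg (uCk k, 0)
  else if Nat.eqb o 4 then (thCk k, 0)
  else if Nat.eqb o 5 then rneg (thCk k, 0)
  else if Nat.ltb o (6 + N) then (uCk k, - INR (k * Z) - INR (o - 6) * INR N)
  else if Nat.ltb o (6 + 2 * N) then (uCk k, - INR (k * Z) - INR (o - 6 - N) * INR N - (INR N - 1))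
  else r_zero.

Definition rowB (k o : nat) : row :=
  if Nat.eqb o 0 then r_pass 0
  else if Nat.eqb o 1 then r_pass 1
  else if Nat.eqb o 2 then r_pass 2
  else if Nat.eqb o 3 then r_pass 3
  else if Nat.eqb o 4 then r_pass 4
  else if Nat.eqb o 5 then r_pass 5
  else if Nat.ltb o (6 + N) then (cadd (HC k (o - 6)) bbC, Hst N Thu k (o - 6) 0 - 2 * INR (o - 6) + 1)
  else if Nat.ltb o (6 + 2 * N) then (cadd (HC k (o - 6 - N)) bbC, Hst N Thu k (o - 6 - N) 0 - 2 * INR (o - 6 - N) - 1)
  else if Nat.eqb o (6 + 2 * N) then (bbC, 1)
  else if Nat.eqb o (7 + 2 * N) then (bbC, - 2 * INR N + 1)
  else r_zero.

Definition xCk (k : nat) : row := if Nat.eqb k 0 then (thC1, Thu 0%nat) else (xC1, 0).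

Definition rowE (k o : nat) : row :=
  if Nat.eqb o 0 then r_pass 0
  else if Nat.eqb o 1 then (if Nat.eqb k 0 then r_pass 1 else r_accg)
  else if Nat.eqb o 2 then xCk k
  else if Nat.eqb o 3 then rneg (xCk k)
  else if Nat.eqb o 4 then (csc 3 (fst (xCk k)), 3 * snd (xCk k) - 1)
  else if Nat.eqb o 5 then (csc 3 (fst (xCk k)), 3 * snd (xCk k) - 2)
  else if Nat.eqb o 6 then (pt 0 1, - (INR k * INR K) + 1)
  else if Nat.eqb o 7 then (pt 0 1, - (INR k * INR K))
  else if Nat.eqb o 8 then (pt 0 1, - (INR (S k) * INR K) + 1)
  else if Nat.eqb o 9 then (pt 0 1, - (INR (S k) * INR K))
  else if andb (Nat.leb 10 o) (Nat.leb o 13) then (if Nat.eqb k 0 then r_zero else gaterow o)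
  else r_zero.

Definition rowG (o : nat) : row :=
  if Nat.eqb o 0 then r_pass 0
  else if Nat.eqb o 1 then r_accg
  else if andb (Nat.leb 10 o) (Nat.leb o 13) then gaterow o
  else r_zero.

Definition rowZ (o : nat) : row :=
  if Nat.eqb o 0 then r_pass 0
  else if Nat.eqb o 1 then r_accg
  else r_zero.

Definition rowP (o : nat) : row :=
  if Nat.eqb o 0 then r_pass 0
  else if Nat.eqb o 1 then r_pass 1
  else r_zero.

Definition rowK (kd : LK) (o : nat) : row :=
  match kd with
  | KF k => rowF k o | KA k => rowA k o | KB k => rowB k o | KE k => rowE k o
  | KG => rowG o | KZ => rowZ o | KP => rowP o
  end.

Variables tt a0 : R.
Definition uu := uf N NS M tt.
Definition thacc (k : nat) := sumR k (fun k' => Ostage N (Hst N Thu k') (uu - INR (k' * Z))).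
Definition th := thu N NS M be uu.
Definition gates (k : nat) := gate (bitf (xs k th)) (cd N NS k tt).
Definition bb (k : nat) := bitf (xs k th).
Definition cc (k : nat) := cd N NS k tt.
Definition gatev (k o : nat) : R :=
  if Nat.eqb o 10 then relu (bb k - cc k)
  else if Nat.eqb o 11 then relu (bb k - cc k - 1)
  else if Nat.eqb o 12 then relu (- cc k)
  else relu (- cc k - 1).

Definition exF (k o : nat) : R :=
  if Nat.eqb o 0 then tt
  else if Nat.eqb o 1 then a0
  else if Nat.eqb o 2 then relu (zz K k tt)
  else if Nat.eqb o 3 then relu (- zz K k tt)
  else if Nat.eqb o 4 then relu (tt - INR k * INR K)
  else if Nat.eqb o 5 then relu (tt - INR k * INR K - (INR K - 1))
  else 0.

Definition exA (k o : nat) : R :=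
  if Nat.eqb o 0 then tt
  else if Nat.eqb o 1 then a0
  else if Nat.eqb o 2 then relu uu
  else if Nat.eqb o 3 then relu (- uu)
  else if Nat.eqb o 4 then relu (thacc k)
  else if Nat.eqb o 5 then relu (- thacc k)
  else if Nat.ltb o (6 + N) then relu (uu - INR (k * Z) - INR (o - 6) * INR N)
  else if Nat.ltb o (6 + 2 * N) then relu (uu - INR (k * Z) - INR (o - 6 - N) * INR N - (INR N - 1))
  else 0.

Definition vv (k : nat) := uu - INR (k * Z).

Definition exB (k o : nat) : R :=
  if Nat.eqb o 0 then tt
  else if Nat.eqb o 1 then a0
  else if Nat.eqb o 2 then relu uu
  else if Nat.eqb o 3 then relu (- uu)
  else if Nat.eqb o 4 then relu (thacc k)
  else if Nat.eqb o 5 then relu (- thacc k)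
  else if Nat.ltb o (6 + N) then relu (Hv N (Hst N Thu k) (o - 6) (vv k) + 2 * (zz N N (vv k) - INR (o - 6)) + 1)
  else if Nat.ltb o (6 + 2 * N) then relu (Hv N (Hst N Thu k) (o - 6 - N) (vv k) + 2 * (zz N N (vv k) - INR (o - 6 - N)) - 1)
  else if Nat.eqb o (6 + 2 * N) then relu (2 * zz N N (vv k) + 1)
  else if Nat.eqb o (7 + 2 * N) then relu (2 * zz N N (vv k) - 2 * INR N + 1)
  else 0.

Definition exE (k o : nat) : R :=
  if Nat.eqb o 0 then tt
  else if Nat.eqb o 1 then a0 + wt * sumR (k - 1) gates
  else if Nat.eqb o 2 then relu (xs k th)
  else if Nat.eqb o 3 then relu (- xs k th)
  else if Nat.eqb o 4 then relu (3 * xs k th - 1)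
  else if Nat.eqb o 5 then relu (3 * xs k th - 2)
  else if Nat.eqb o 6 then relu (tt - INR k * INR K + 1)
  else if Nat.eqb o 7 then relu (tt - INR k * INR K)
  else if Nat.eqb o 8 then relu (tt - INR (S k) * INR K + 1)
  else if Nat.eqb o 9 then relu (tt - INR (S k) * INR K)
  else if andb (Nat.leb 10 o) (Nat.leb o 13) then (if Nat.eqb k 0 then 0 else gatev (k - 1) o)
  else 0.

Definition exG (o : nat) : R :=
  if Nat.eqb o 0 then tt
  else if Nat.eqb o 1 then a0 + wt * sumR (M - 1) gates
  else if andb (Nat.leb 10 o) (Nat.leb o 13) then gatev (M - 1) o
  else 0.

Definition exZ (o : nat) : R :=
  if Nat.eqb o 0 then tt
  else if Nat.eqb o 1 then a0 + wt * sumR M gates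
  else 0.

Definition exK (kd : LK) (o : nat) : R :=
  match kd with
  | KF k => exF k o | KA k => exA k o | KB k => exB k o | KE k => exE k o
  | KG => exG o | KZ => exZ o | KP => exZ o
  end.
End Rows.

Lemma zz_S P k x : zz P (S k) x = zz P k x + (-1) ^ k * clk P x k.
Proof. reflexivity. Qed.

Lemma HC_id N e f (Dl : nat -> R) : (1 <= N)%nat ->
  sumR N (fun m => (if Nat.eqb m 0 then 0 else - Dl (m - 1)%nat) * e m)
  + sumR N (fun m => (if Nat.ltb m (N - 1) then Dl m else 0) * f m)
  = sumR (N - 1) (fun m => Dl m * (f m - e (S m))).
Proof.
  intros HN. destruct N as [|N']; [lia|]. replace (S N' - 1)%nat with N' by lia.
  rewrite sumR_shift. simpl sumR at 2.
  rewrite (sumR_ext N' (fun i => (if Nat.eqb (S i) 0 then 0 else - Dl (S i - 1)%nat) * e (S i)) (fun i => - Dl i * e (S i))).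
  2:{ intros i Hi. simpl. replace (i - 0)%nat with i by lia. reflexivity. }
  rewrite (sumR_ext N' (fun m => (if Nat.ltb m N' then Dl m else 0) * f m) (fun m => Dl m * f m)).
  2:{ intros i Hi. destruct (Nat.ltb_spec i N'); [reflexivity|lia]. }
  destruct (Nat.ltb_spec N' N'); [lia|].
  replace (sumR N' (fun m => Dl m * (f m - e (S m)))) with (sumR N' (fun m => Dl m * f m) + sumR N' (fun i => - Dl i * e (S i))).
  - simpl. ring.
  - rewrite <- sumR_plus. apply sumR_ext. intros; ring.
Qed.

Ltac ocases o :=
  repeat match goal with
  | |- context [Nat.eqb o ?n] => destruct (Nat.eqb_spec o n); [subst o|]
  end.

Ltac dotsimp :=
  repeat (rewrite ?dot_add, ?dot_csc, ?dot_c0; try (rewrite dot_pt by lia)).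

Section Steps.
Variables N NS M : nat.
Hypothesis HN : (3 <= N)%nat.
Hypothesis HNS : (1 <= NS)%nat.
Hypothesis HM : (1 <= M)%nat.
Variable be : nat -> bool.
Variable wt : R.
Variables tt a0 : R.
Hypothesis Htt : 0 <= tt.
Hypothesis Ha0 : 0 <= a0.
Hypothesis Hwt : 0 <= wt.

Let w := (2 * N + 8)%nat.
Ltac dotsimp2 := repeat (rewrite ?dot_add, ?dot_csc, ?dot_c0; try (rewrite dot_pt by (unfold w; lia))).

Definition st_ok (kd : LK) (s : nat -> R) := forall o, (o < w)%nat -> s o = exK N NS M be wt tt a0 kd o.

Definition new_st (kd : LK) (s : nat -> R) (o : nat) :=
  relu (dot w (fst (rowK N NS M be wt kd o)) s + snd (rowK N NS M be wt kd o)).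

Lemma step_F0 s : s 0%nat = tt -> s 1%nat = a0 -> st_ok (KF 0) (new_st (KF 0) s).
Proof.
  intros H0 H1 o Ho. unfold new_st, rowK, exK, rowF, exF. ocases o; simpl fst; simpl snd; dotsimp; rewrite ?H0, ?H1.
  all: try (unfold r_pass, r_zero; simpl fst; simpl snd; dotsimp; rewrite ?H0, ?H1).
  all: unfold zz; simpl sumR; rewrite ?Rmult_0_l, ?Rmult_1_l, ?Rplus_0_r, ?Ropp_0.
  all: try (rewrite relu_pos by lra; reflexivity).
  all: try (f_equal; ring).
  all: try (apply relu_neg; lra).
Qed.


Lemma stF_regs k s : st_ok (KF k) s ->
  s 0%nat = tt /\ s 1%nat = a0 /\ s 2%nat = relu (zz (Kseg N NS) k tt) /\ s 3%nat = relu (- zz (Kseg N NS) k tt) /\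
  s 4%nat = relu (tt - INR k * INR (Kseg N NS)) /\ s 5%nat = relu (tt - INR k * INR (Kseg N NS) - (INR (Kseg N NS) - 1)).
Proof. intros H. repeat split; rewrite H by (unfold w; lia); reflexivity. Qed.

Lemma step_F k s : (1 <= k)%nat -> st_ok (KF (k - 1)) s -> st_ok (KF k) (new_st (KF k) s).
Proof.
  intros Hk Hs. destruct (stF_regs _ _ Hs) as (R0 & R1 & R2 & R3 & R4 & R5).
  intros o Ho. unfold new_st, rowK, exK, rowF, exF. destruct (Nat.eqb_spec k 0); [lia|].
  ocases o; unfold r_pass, r_zero, rneg, puC; simpl fst; simpl snd; dotsimp; rewrite ?R0, ?R1, ?R2, ?R3, ?R4, ?R5.
  all: rewrite ?Rmult_0_l, ?Rmult_1_l, ?Rplus_0_r, ?Ropp_0.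
  all: try (rewrite relu_pos by lra; reflexivity).
  all: try (f_equal; ring).
  all: try (apply relu_neg; lra).
  all: f_equal; replace (zz (Kseg N NS) k tt) with (zz (Kseg N NS) (S (k - 1)) tt) by (f_equal; lia);
    rewrite zz_S; unfold clk, clampA;
    replace (relu (zz (Kseg N NS) (k - 1) tt)) with (zz (Kseg N NS) (k - 1) tt + relu (- zz (Kseg N NS) (k - 1) tt)) by (pose proof (relu_pm (zz (Kseg N NS) (k - 1) tt)); lra);
    replace (k - 1 + 1)%nat with k by lia; ring.
Qed.


Ltac regsolve := repeat match goal with
  | |- context [Nat.eqb ?a ?b] => destruct (Nat.eqb_spec a b); try lia
  | |- context [Nat.ltb ?a ?b] => destruct (Nat.ltb_spec a b); try lia
  | |- context [Nat.leb ?a ?b] => destruct (Nat.leb_spec a b); try lia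
  end.

Lemma exB_p k j : (j < N)%nat -> exK N NS M be wt tt a0 (KB k) (6 + j) =
  relu (Hv N (Hst N (Th N NS M be) k) j (vv N NS M tt k) + 2 * (zz N N (vv N NS M tt k) - INR j) + 1).
Proof. intros Hj. unfold exK; cbv beta iota. unfold exB. regsolve. replace (6 + j - 6)%nat with j by lia. reflexivity. Qed.

Lemma exB_q k j : (j < N)%nat -> exK N NS M be wt tt a0 (KB k) (6 + N + j) =
  relu (Hv N (Hst N (Th N NS M be) k) j (vv N NS M tt k) + 2 * (zz N N (vv N NS M tt k) - INR j) - 1).
Proof. intros Hj. unfold exK; cbv beta iota. unfold exB. regsolve. replace (6 + N + j - 6 - N)%nat with j by lia. reflexivity. Qed.

Lemma exB_c1 k : exK N NS M be wt tt a0 (KB k) (6 + 2 * N) = relu (2 * zz N N (vv N NS M tt k) + 1).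
Proof. unfold exK; cbv beta iota. unfold exB. regsolve. all: try reflexivity. Qed.

Lemma exB_c2 k : exK N NS M be wt tt a0 (KB k) (7 + 2 * N) = relu (2 * zz N N (vv N NS M tt k) - 2 * INR N + 1).
Proof. unfold exK; cbv beta iota. unfold exB. regsolve. all: try reflexivity. Qed.

Lemma Orow_val k s : st_ok (KB k) s -> dot w (Orow N) s = Ostage N (Hst N (Th N NS M be) k) (vv N NS M tt k).
Proof.
  intros Hs. unfold Orow. rewrite !dot_add, !dot_blk by (unfold w; lia). rewrite !dot_pt by (unfold w; lia).
  rewrite Hs, exB_c1 by (unfold w; lia). rewrite Hs, exB_c2 by (unfold w; lia).
  rewrite (sumR_ext N (fun m => 1 * s (6 + m)%nat) (fun m => relu (Hv N (Hst N (Th N NS M be) k) m (vv N NS M tt k) + 2 * (zz N N (vv N NS M tt k) - INR m) + 1))).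
  2:{ intros i Hi. rewrite Hs by (unfold w; lia). rewrite exB_p by auto. ring. }
  rewrite (sumR_ext N (fun m => -1 * s (6 + N + m)%nat) (fun m => - relu (Hv N (Hst N (Th N NS M be) k) m (vv N NS M tt k) + 2 * (zz N N (vv N NS M tt k) - INR m) - 1))).
  2:{ intros i Hi. rewrite Hs by (unfold w; lia). rewrite exB_q by auto. ring. }
  unfold Ostage, Ob. rewrite sumR_minus. 
  replace (sumR N (fun m => - relu (Hv N (Hst N (Th N NS M be) k) m (vv N NS M tt k) + 2 * (zz N N (vv N NS M tt k) - INR m) - 1)))
    with (- sumR N (fun m => relu (Hv N (Hst N (Th N NS M be) k) m (vv N NS M tt k) + 2 * (zz N N (vv N NS M tt k) - INR m) - 1))).
  - ring.
  - replace (- sumR N (fun m => relu (Hv N (Hst N (Th N NS M be) k) m (vv N NS M tt k) + 2 * (zz N N (vv N NS M tt k) - INR m) - 1)))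
      with (-1 * sumR N (fun m => relu (Hv N (Hst N (Th N NS M be) k) m (vv N NS M tt k) + 2 * (zz N N (vv N NS M tt k) - INR m) - 1))) by ring.
    rewrite <- sumR_scal. apply sumR_ext. intros; ring.
Qed.

Lemma stB_regs k s : st_ok (KB k) s ->
  s 0%nat = tt /\ s 1%nat = a0 /\ s 2%nat = relu (uu N NS M tt) /\ s 3%nat = relu (- uu N NS M tt) /\
  s 4%nat = relu (thacc N NS M be tt k) /\ s 5%nat = relu (- thacc N NS M be tt k).
Proof. intros H. repeat split; rewrite H by (unfold w; lia); reflexivity. Qed.

Lemma stA_regs k s : st_ok (KA k) s ->
  s 0%nat = tt /\ s 1%nat = a0 /\ s 2%nat = relu (uu N NS M tt) /\ s 3%nat = relu (- uu N NS M tt) /\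
  s 4%nat = relu (thacc N NS M be tt k) /\ s 5%nat = relu (- thacc N NS M be tt k).
Proof. intros H. repeat split; rewrite H by (unfold w; lia); reflexivity. Qed.

Lemma thacc_S k : thacc N NS M be tt (S k) = thacc N NS M be tt k + Ostage N (Hst N (Th N NS M be) k) (uu N NS M tt - INR (k * Zs N)).
Proof. reflexivity. Qed.

Lemma rmin x : relu x - relu (- x) = x.
Proof. apply relu_pm. Qed.
Lemma relu_split x : relu x = x + relu (- x).
Proof. pose proof (relu_pm x). lra. Qed.

Lemma step_A k s : (k < NS)%nat -> ((k = 0)%nat -> st_ok (KF (M - 1)) s) -> ((1 <= k)%nat -> st_ok (KB (k - 1)) s) ->
  st_ok (KA k) (new_st (KA k) s).
Proof.
  intros Hk HF HB.
  assert (U : dot w (uCk M k) s = uu N NS M tt /\ dot w (thCk N k) s = thacc N NS M be tt k).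
  { unfold uCk, thCk. destruct (Nat.eqb_spec k 0) as [E|E].
    - destruct (stF_regs _ _ (HF E)) as (R0 & R1 & R2 & R3 & R4 & R5). subst k. split.
      + unfold puC. dotsimp2. rewrite R2, R3, R4, R5. 
        unfold uu, uf.  replace (zz (Kseg N NS) M tt) with (zz (Kseg N NS) (S (M - 1)) tt) by (f_equal; lia).
        rewrite zz_S. unfold clk, clampA. rewrite (relu_split (zz (Kseg N NS) (M - 1) tt)). ring.
      + rewrite dot_c0. unfold thacc. reflexivity.
    - pose proof (HB ltac:(lia)) as Hs. destruct k as [|k']; [lia|]. replace (S k' - 1)%nat with k' in Hs by lia.
      destruct (stB_regs _ _ Hs) as (R0 & R1 & R2 & R3 & R4 & R5). split.
      + unfold uC1. dotsimp2. rewrite R2, R3. rewrite (relu_split (uu N NS M tt)). ring.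
      + unfold thC1. rewrite !dot_add. rewrite (Orow_val _ _ Hs). dotsimp2. rewrite R4, R5.
        unfold thacc at 2. simpl sumR. fold (thacc N NS M be tt k').
        unfold vv. rewrite (relu_split (thacc N NS M be tt k')). rewrite thacc_S. ring. }
  destruct U as [U TH].
  assert (S01 : s 0%nat = tt /\ s 1%nat = a0).
  { destruct k as [|k']. destruct (stF_regs _ _ (HF eq_refl)) as (R0 & R1 & _); auto.
    destruct (stB_regs _ _ (HB ltac:(lia))) as (R0 & R1 & _); auto. }
  destruct S01 as [S0 S1].
  intros o Ho. unfold new_st, rowK, exK, rowA, exA.
  regsolve; unfold r_pass, rneg; simpl fst; simpl snd; rewrite ?dot_csc, ?U, ?TH.
  all: try dotsimp2.
  all: rewrite ?S0, ?S1, ?Rplus_0_r, ?Ropp_0, ?Rplus_0_r, ?Rmult_1_l.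
  all: try (rewrite relu_pos by lra; reflexivity).
  all: try (f_equal; ring).
  all: try (apply relu_neg; lra).
Qed.

Lemma exA_e k m : (m < N)%nat -> exK N NS M be wt tt a0 (KA k) (6 + m) = relu (vv N NS M tt k - INR m * INR N).
Proof. intros Hm. unfold exK; cbv beta iota. unfold exA. regsolve. replace (6 + m - 6)%nat with m by lia. unfold vv. try (f_equal; ring). Qed.

Lemma exA_f k m : (m < N)%nat -> exK N NS M be wt tt a0 (KA k) (6 + N + m) = relu (vv N NS M tt k - INR m * INR N - (INR N - 1)).
Proof. intros Hm. unfold exK; cbv beta iota. unfold exA. regsolve. replace (6 + N + m - 6 - N)%nat with m by lia. unfold vv. try (f_equal; ring). Qed.

Lemma bbC_val k s : st_ok (KA k) s -> dot w (bbC N) s = 2 * zz N N (vv N NS M tt k).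
Proof.
  intros Hs. unfold bbC. rewrite dot_add, !dot_blk by (unfold w; lia).
  rewrite (sumR_ext N (fun m => 2 * (-1) ^ m * s (6 + m)%nat) (fun m => 2 * ((-1) ^ m * relu (vv N NS M tt k - INR m * INR N)))).
  2:{ intros i Hi. rewrite Hs, exA_e by (unfold w; lia). ring. }
  rewrite (sumR_ext N (fun m => -2 * (-1) ^ m * s (6 + N + m)%nat) (fun m => -2 * ((-1) ^ m * relu (vv N NS M tt k - INR m * INR N - (INR N - 1))))).
  2:{ intros i Hi. rewrite Hs, exA_f by (unfold w; lia). ring. }
  rewrite !sumR_scal. unfold zz, clk, clampA.
  rewrite (sumR_ext N (fun k0 => (-1) ^ k0 * (relu (vv N NS M tt k - INR k0 * INR N) - relu (vv N NS M tt k - INR k0 * INR N - (INR N - 1))))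
     (fun k0 => (-1) ^ k0 * relu (vv N NS M tt k - INR k0 * INR N) - (-1) ^ k0 * relu (vv N NS M tt k - INR k0 * INR N - (INR N - 1)))) by (intros; ring).
  rewrite sumR_minus. ring.
Qed.

Lemma HC_val k j s : st_ok (KA k) s ->
  dot w (HC N NS M be k j) s = Hv N (Hst N (Th N NS M be) k) j (vv N NS M tt k) - Hst N (Th N NS M be) k j 0.
Proof.
  intros Hs. unfold HC. rewrite dot_add, !dot_blk by (unfold w; lia).
  set (v := vv N NS M tt k).
  rewrite (sumR_ext N (fun m => (if Nat.eqb m 0 then 0 else - Dl N NS M be k j (m - 1)) * s (6 + m)%nat)
    (fun m => (if Nat.eqb m 0 then 0 else - Dl N NS M be k j (m - 1)) * relu (v - INR m * INR N))).
  2:{ intros i Hi. rewrite Hs, exA_e by (unfold w; lia). reflexivity. }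
  rewrite (sumR_ext N (fun m => (if Nat.ltb m (N - 1) then Dl N NS M be k j m else 0) * s (6 + N + m)%nat)
    (fun m => (if Nat.ltb m (N - 1) then Dl N NS M be k j m else 0) * relu (v - INR m * INR N - (INR N - 1)))).
  2:{ intros i Hi. rewrite Hs, exA_f by (unfold w; lia). reflexivity. }
  rewrite (HC_id N (fun m => relu (v - INR m * INR N)) (fun m => relu (v - INR m * INR N - (INR N - 1))) (Dl N NS M be k j)) by lia.
  unfold Hv. ring_simplify. apply sumR_ext. intros m Hm. unfold Dl, rp, clampA. f_equal.
  rewrite S_INR. f_equal; f_equal; ring.
Qed.

Lemma step_B k s : st_ok (KA k) s -> st_ok (KB k) (new_st (KB k) s).
Proof.
  intros Hs. destruct (stA_regs _ _ Hs) as (R0 & R1 & R2 & R3 & R4 & R5).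
  intros o Ho. unfold new_st, rowK, exK, rowB, exB.
  regsolve; unfold r_pass, r_zero; simpl fst; simpl snd; dotsimp2;
    rewrite ?R0, ?R1, ?R2, ?R3, ?R4, ?R5, ?Rmult_1_l, ?Rplus_0_r, ?relu_id.
  all: try (rewrite relu_pos by lra; reflexivity).
  all: try reflexivity.
  all: try (rewrite (bbC_val _ _ Hs); f_equal; ring).
  all: try (apply relu_neg; lra).
  all: rewrite (HC_val _ _ _ Hs), (bbC_val _ _ Hs); f_equal; ring.
Qed.

Lemma gatev_sum q : gatev N NS M be tt q 10 - gatev N NS M be tt q 11 - gatev N NS M be tt q 12 + gatev N NS M be tt q 13
  = gates N NS M be tt q.
Proof. unfold gatev, gates, gate, clampA, bb, cc. simpl. replace (- cd N NS q tt - 1) with (- cd N NS q tt - 1) by ring.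
  ring. Qed.

Lemma gates_nonneg q : 0 <= gates N NS M be tt q.
Proof. unfold gates. apply gate_nonneg. apply bit_range. Qed.

Lemma sum_gates_nonneg q : 0 <= sumR q (gates N NS M be tt).
Proof. induction q; simpl. lra. pose proof (gates_nonneg q). lra. Qed.

Lemma stE_regs k s : st_ok (KE k) s ->
  s 0%nat = tt /\ s 1%nat = a0 + wt * sumR (k - 1) (gates N NS M be tt) /\
  s 2%nat = relu (xs k (th N NS M be tt)) /\ s 3%nat = relu (- xs k (th N NS M be tt)) /\
  s 4%nat = relu (3 * xs k (th N NS M be tt) - 1) /\ s 5%nat = relu (3 * xs k (th N NS M be tt) - 2) /\
  s 6%nat = relu (tt - INR k * INR (Kseg N NS) + 1) /\ s 7%nat = relu (tt - INR k * INR (Kseg N NS)) /\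
  s 8%nat = relu (tt - INR (S k) * INR (Kseg N NS) + 1) /\ s 9%nat = relu (tt - INR (S k) * INR (Kseg N NS)) /\
  s 10%nat - s 11%nat - s 12%nat + s 13%nat = (if Nat.eqb k 0 then 0 else gates N NS M be tt (k - 1)).
Proof. intros H. repeat split; try (rewrite H by (unfold w; lia); reflexivity).
  rewrite !H by (unfold w; lia). unfold exK, exE. simpl. destruct (Nat.eqb_spec k 0). ring.
  apply gatev_sum. Qed.

Lemma bit_eq x : relu (3 * x - 1) - relu (3 * x - 2) = bitf x.
Proof. unfold bitf, clampA. f_equal. f_equal. ring. Qed.

Lemma cd_eq k : (relu (tt - INR k * INR (Kseg N NS) + 1) - relu (tt - INR k * INR (Kseg N NS)))
  + (relu (tt - INR (S k) * INR (Kseg N NS) + 1) - relu (tt - INR (S k) * INR (Kseg N NS))) - 1 = cd N NS k tt.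
Proof. unfold cd, rampj, rp, clampA. replace (tt - INR k * INR (Kseg N NS) + 1 - 1) with (tt - INR k * INR (Kseg N NS)) by ring.
  replace (tt - INR (S k) * INR (Kseg N NS) + 1 - 1) with (tt - INR (S k) * INR (Kseg N NS)) by ring. ring. Qed.

Lemma step_E k s :
  s 0%nat = tt -> 
  dot w (fst (xCk N NS M be k)) s + snd (xCk N NS M be k) = xs k (th N NS M be tt) ->
  relu (dot w (fst (rowE N NS M be wt k 1)) s + snd (rowE N NS M be wt k 1)) = a0 + wt * sumR (k - 1) (gates N NS M be tt) ->
  ((1 <= k)%nat -> dot w bC s = bitf (xs (k - 1) (th N NS M be tt)) /\ dot w cdC s = cd N NS (k - 1) tt + 1) ->
  st_ok (KE k) (new_st (KE k) s).
Proof.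
  intros S0 HX HACC HG o Ho. unfold new_st. unfold rowK, exK. 
  destruct (Nat.eqb_spec o 1) as [E1|E1]. { subst o. rewrite HACC. unfold exE. simpl. reflexivity. }
  unfold rowE, exE.
  destruct (Nat.eqb_spec o 0). { subst o. cbv beta iota. unfold r_pass. cbn [fst snd]. dotsimp2. rewrite S0. rewrite relu_pos by lra. ring. }
  destruct (Nat.eqb_spec o 1); [lia|].
  destruct (Nat.eqb_spec o 2). { cbv beta iota. rewrite HX. reflexivity. }
  destruct (Nat.eqb_spec o 3). { cbv beta iota. unfold rneg. cbn [fst snd]. rewrite dot_csc. f_equal. rewrite <- HX. ring. }
  destruct (Nat.eqb_spec o 4). { cbv beta iota. cbn [fst snd]. rewrite dot_csc. f_equal. rewrite <- HX. ring. }
  destruct (Nat.eqb_spec o 5). { cbv beta iota. cbn [fst snd]. rewrite dot_csc. f_equal. rewrite <- HX. ring. }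
  destruct (Nat.eqb_spec o 6). { cbv beta iota. cbn [fst snd]. dotsimp2. rewrite S0. f_equal. ring. }
  destruct (Nat.eqb_spec o 7). { cbv beta iota. cbn [fst snd]. dotsimp2. rewrite S0. f_equal. ring. }
  destruct (Nat.eqb_spec o 8). { cbv beta iota. cbn [fst snd]. dotsimp2. rewrite S0. f_equal. ring. }
  destruct (Nat.eqb_spec o 9). { cbv beta iota. cbn [fst snd]. dotsimp2. rewrite S0. f_equal. ring. }
  destruct (Nat.leb_spec 10 o); destruct (Nat.leb_spec o 13); cbn [andb]; cbv beta iota;
    try (unfold r_zero; cbn [fst snd]; rewrite dot_c0; apply relu_neg; lra).
  destruct (Nat.eqb_spec k 0). { cbv beta iota. unfold r_zero; cbn [fst snd]; rewrite dot_c0; apply relu_neg; lra. }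
  cbv beta iota. destruct (HG ltac:(lia)) as [HB HC].
  assert (o = 10 \/ o = 11 \/ o = 12 \/ o = 13)%nat as Ho' by lia.
  unfold gaterow, gatev, bb, cc.
  destruct Ho' as [E|[E|[E|E]]]; subst o; cbn [Nat.eqb fst snd]; rewrite ?dot_add, ?dot_csc, ?HB, ?HC; f_equal; ring.
Qed.

Lemma sumR_last n f : (1 <= n)%nat -> sumR n f = sumR (n - 1) f + f (n - 1)%nat.
Proof. intros. destruct n; [lia|]. simpl. replace (n - 0)%nat with n by lia. reflexivity. Qed.

Lemma sumR_gates_S q : sumR (S q) (gates N NS M be tt) = sumR q (gates N NS M be tt) + gates N NS M be tt q.
Proof. reflexivity. Qed.

Lemma step_E0 s : st_ok (KB (NS - 1)) s -> st_ok (KE 0) (new_st (KE 0) s).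
Proof.
  intros Hs. destruct (stB_regs _ _ Hs) as (R0 & R1 & R2 & R3 & R4 & R5).
  apply step_E; auto.
  - unfold xCk. simpl Nat.eqb. cbv beta iota. cbn [fst snd]. unfold thC1. rewrite !dot_add, (Orow_val _ _ Hs).
    dotsimp2. rewrite R4, R5. simpl xs. unfold th, thu, thf.
    rewrite (relu_split (thacc N NS M be tt (NS - 1))).
    rewrite (sumR_last NS) by lia. unfold vv, thacc, uu. ring.
  - unfold rowE. simpl Nat.eqb. cbv beta iota. unfold r_pass. cbn [fst snd]. dotsimp2. rewrite R1. simpl sumR.
    rewrite relu_pos by lra. ring.
  - intros; lia.
Qed.

Lemma step_Ek k s : st_ok (KE k) s -> st_ok (KE (S k)) (new_st (KE (S k)) s).
Proof.
  intros Hs. destruct (stE_regs _ _ Hs) as (R0 & R1 & R2 & R3 & R4 & R5 & R6 & R7 & R8 & R9 & RG).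
  apply step_E; auto.
  - unfold xCk. simpl Nat.eqb. cbv beta iota. cbn [fst snd]. unfold xC1, uC1. dotsimp2.
    rewrite R2, R3, R4, R5. simpl xs. unfold Fx.
    rewrite (relu_split (xs k (th N NS M be tt))). unfold clampA.
    replace (3 * xs k (th N NS M be tt) - 1 - 1) with (3 * xs k (th N NS M be tt) - 2) by ring. ring.
  - unfold rowE. simpl Nat.eqb. cbv beta iota. unfold r_accg, gateC. cbn [fst snd].
    dotsimp2. rewrite R1.
    replace (1 * (a0 + wt * sumR (k - 1) (gates N NS M be tt)) + wt * (1 * s 10%nat + (-1 * s 11%nat + (-1 * s 12%nat + 1 * s 13%nat)))) with
      (a0 + wt * (sumR (k - 1) (gates N NS M be tt) + (s 10%nat - s 11%nat - s 12%nat + s 13%nat))) by ring.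
    rewrite RG. rewrite Rplus_0_r.
    assert (E : sumR (k - 1) (gates N NS M be tt) + (if Nat.eqb k 0 then 0 else gates N NS M be tt (k - 1)) = sumR (S k - 1) (gates N NS M be tt)).
    { destruct (Nat.eqb_spec k 0). subst k. simpl. ring. replace (S k - 1)%nat with (S (k - 1)) by lia. reflexivity. }
    rewrite E. apply relu_pos. pose proof (sum_gates_nonneg (S k - 1)). nra.
  - intros _. split.
    + unfold bC. dotsimp2. rewrite R4, R5. rewrite <- bit_eq. replace (S k - 1)%nat with k by lia. ring.
    + unfold cdC. dotsimp2. rewrite R6, R7, R8, R9. replace (S k - 1)%nat with k by lia. rewrite <- (cd_eq k). ring.
Qed.

Lemma step_G s : st_ok (KE (M - 1)) s -> st_ok KG (new_st KG s).
Proof.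
  intros Hs. destruct (stE_regs _ _ Hs) as (R0 & R1 & R2 & R3 & R4 & R5 & R6 & R7 & R8 & R9 & RG).
  intros o Ho. unfold new_st, rowK, exK, rowG, exG.
  destruct (Nat.eqb_spec o 0). { subst o. cbv beta iota. unfold r_pass. cbn [fst snd]. dotsimp2. rewrite R0. rewrite relu_pos by lra. ring. }
  destruct (Nat.eqb_spec o 1).
  { cbv beta iota. unfold r_accg, gateC. cbn [fst snd]. dotsimp2. rewrite R1.
    replace (1 * (a0 + wt * sumR (M - 1 - 1) (gates N NS M be tt)) + wt * (1 * s 10%nat + (-1 * s 11%nat + (-1 * s 12%nat + 1 * s 13%nat)))) with
      (a0 + wt * (sumR (M - 1 - 1) (gates N NS M be tt) + (s 10%nat - s 11%nat - s 12%nat + s 13%nat))) by ring.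
    rewrite RG. rewrite Rplus_0_r.
    assert (E : sumR (M - 1 - 1) (gates N NS M be tt) + (if Nat.eqb (M - 1) 0 then 0 else gates N NS M be tt (M - 1 - 1)) = sumR (M - 1) (gates N NS M be tt)).
    { destruct (Nat.eqb_spec (M - 1) 0) as [E0|E0]. rewrite E0. simpl. ring. rewrite (sumR_last (M - 1)) by lia. ring. }
    rewrite E. apply relu_pos. pose proof (sum_gates_nonneg (M - 1)). nra. }
  destruct (Nat.leb_spec 10 o); destruct (Nat.leb_spec o 13); cbn [andb]; cbv beta iota;
    try (unfold r_zero; cbn [fst snd]; rewrite dot_c0; apply relu_neg; lra).
  assert (HB : dot w bC s = bitf (xs (M - 1) (th N NS M be tt))) by (unfold bC; dotsimp2; rewrite R4, R5; rewrite <- bit_eq; ring).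
  assert (HC : dot w cdC s = cd N NS (M - 1) tt + 1).
  { unfold cdC. dotsimp2. rewrite R6, R7, R8, R9. rewrite <- (cd_eq (M - 1)). ring. }
  assert (o = 10 \/ o = 11 \/ o = 12 \/ o = 13)%nat as Ho' by lia.
  unfold gaterow, gatev, bb, cc.
  destruct Ho' as [E|[E|[E|E]]]; subst o; cbn [Nat.eqb fst snd]; rewrite ?dot_add, ?dot_csc, ?HB, ?HC; f_equal; ring.
Qed.

Lemma step_Z s : st_ok KG s -> st_ok KZ (new_st KZ s).
Proof.
  intros Hs.
  assert (R0 : s 0%nat = tt) by (rewrite Hs by (unfold w; lia); reflexivity).
  assert (R1 : s 1%nat = a0 + wt * sumR (M - 1) (gates N NS M be tt)) by (rewrite Hs by (unfold w; lia); reflexivity).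
  assert (RG : s 10%nat - s 11%nat - s 12%nat + s 13%nat = gates N NS M be tt (M - 1)).
  { rewrite !Hs by (unfold w; lia). unfold exK, exG. simpl. apply gatev_sum. }
  intros o Ho. unfold new_st, rowK, exK, rowZ, exZ.
  destruct (Nat.eqb_spec o 0). { subst o. cbv beta iota. unfold r_pass. cbn [fst snd]. dotsimp2. rewrite R0. rewrite relu_pos by lra. ring. }
  destruct (Nat.eqb_spec o 1).
  { cbv beta iota. unfold r_accg, gateC. cbn [fst snd]. dotsimp2. rewrite R1.
    replace (1 * (a0 + wt * sumR (M - 1) (gates N NS M be tt)) + wt * (1 * s 10%nat + (-1 * s 11%nat + (-1 * s 12%nat + 1 * s 13%nat)))) with
      (a0 + wt * (sumR (M - 1) (gates N NS M be tt) + (s 10%nat - s 11%nat - s 12%nat + s 13%nat))) by ring.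
    rewrite RG, Rplus_0_r. rewrite <- (sumR_last M) by lia.
    apply relu_pos. pose proof (sum_gates_nonneg M). nra. }
  cbv beta iota. unfold r_zero; cbn [fst snd]; rewrite dot_c0; apply relu_neg; lra.
Qed.

Lemma step_P kd s : (kd = KZ \/ kd = KP) -> st_ok kd s -> st_ok KP (new_st KP s).
Proof.
  intros Hk Hs.
  assert (R0 : s 0%nat = tt) by (rewrite Hs by (unfold w; lia); destruct Hk; subst; reflexivity).
  assert (R1 : s 1%nat = a0 + wt * sumR M (gates N NS M be tt)) by (rewrite Hs by (unfold w; lia); destruct Hk; subst; reflexivity).
  intros o Ho. unfold new_st, rowK, exK, rowP, exZ.
  destruct (Nat.eqb_spec o 0). { subst o. cbv beta iota. unfold r_pass. cbn [fst snd]. dotsimp2. rewrite R0. rewrite relu_pos by lra. ring. }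
  destruct (Nat.eqb_spec o 1).
  { subst o. cbv beta iota. unfold r_pass. cbn [fst snd]. dotsimp2. rewrite R1. rewrite Rmult_1_l, Rplus_0_r.
    apply relu_pos. pose proof (sum_gates_nonneg M). nra. }
  cbv beta iota. unfold r_zero; cbn [fst snd]; rewrite dot_c0; apply relu_neg; lra.
Qed.
End Steps.

Section Kinds.
Variables M NS : nat.

Lemma kind_F l : (l < M)%nat -> kind M NS l = KF l.
Proof. intros. unfold kind. destruct (Nat.ltb_spec l M); [reflexivity|lia]. Qed.

Lemma kind_A k : (k < NS)%nat -> kind M NS (M + 2 * k) = KA k.
Proof. intros. unfold kind. destruct (Nat.ltb_spec (M + 2 * k) M); [lia|].
  destruct (Nat.ltb_spec (M + 2 * k) (M + 2 * NS)); [|lia].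
  replace (M + 2 * k - M)%nat with (k * 2)%nat by lia.
  replace (Nat.even (k * 2)) with true by (symmetry; apply Nat.even_spec; exists k; lia).
  rewrite Nat.div_mul by lia. reflexivity. Qed.

Lemma kind_B k : (k < NS)%nat -> kind M NS (M + 2 * k + 1) = KB k.
Proof. intros. unfold kind. destruct (Nat.ltb_spec (M + 2 * k + 1) M); [lia|].
  destruct (Nat.ltb_spec (M + 2 * k + 1) (M + 2 * NS)); [|lia].
  replace (M + 2 * k + 1 - M)%nat with (1 + k * 2)%nat by lia.
  replace (Nat.even (1 + k * 2)) with false.
  2:{ symmetry. rewrite <- Nat.negb_odd. replace (Nat.odd (1 + k * 2)) with true. reflexivity. symmetry. apply Nat.odd_spec. exists k; lia. }
  rewrite Nat.div_add by lia. reflexivity. Qed.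

Lemma kind_E k : (k < M)%nat -> kind M NS (M + 2 * NS + k) = KE k.
Proof. intros. unfold kind. destruct (Nat.ltb_spec (M + 2 * NS + k) M); [lia|].
  destruct (Nat.ltb_spec (M + 2 * NS + k) (M + 2 * NS)); [lia|].
  destruct (Nat.ltb_spec (M + 2 * NS + k) (2 * M + 2 * NS)); [|lia]. f_equal. lia. Qed.

Lemma kind_G : kind M NS (2 * M + 2 * NS) = KG.
Proof. unfold kind. destruct (Nat.ltb_spec (2 * M + 2 * NS) M). lia.
  destruct (Nat.ltb_spec (2 * M + 2 * NS) (M + 2 * NS)). lia.
  destruct (Nat.ltb_spec (2 * M + 2 * NS) (2 * M + 2 * NS)). lia. rewrite Nat.eqb_refl. reflexivity. Qed.

Lemma kind_Z : kind M NS (2 * M + 2 * NS + 1) = KZ.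
Proof. unfold kind. destruct (Nat.ltb_spec (2 * M + 2 * NS + 1) M). lia.
  destruct (Nat.ltb_spec (2 * M + 2 * NS + 1) (M + 2 * NS)). lia.
  destruct (Nat.ltb_spec (2 * M + 2 * NS + 1) (2 * M + 2 * NS)). lia.
  destruct (Nat.eqb_spec (2 * M + 2 * NS + 1) (2 * M + 2 * NS)). lia. rewrite Nat.eqb_refl. reflexivity. Qed.

Lemma kind_P l : (2 * M + 2 * NS + 2 <= l)%nat -> kind M NS l = KP.
Proof. intros. unfold kind. destruct (Nat.ltb_spec l M). lia.
  destruct (Nat.ltb_spec l (M + 2 * NS)). lia.
  destruct (Nat.ltb_spec l (2 * M + 2 * NS)). lia.
  destruct (Nat.eqb_spec l (2 * M + 2 * NS)). lia. destruct (Nat.eqb_spec l (2 * M + 2 * NS + 1)). lia. reflexivity. Qed.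

Lemma kind_cases l :
  (l < M /\ kind M NS l = KF l)%nat \/
  (exists k, k < NS /\ l = M + 2 * k /\ kind M NS l = KA k)%nat \/
  (exists k, k < NS /\ l = M + 2 * k + 1 /\ kind M NS l = KB k)%nat \/
  (exists k, k < M /\ l = M + 2 * NS + k /\ kind M NS l = KE k)%nat \/
  (l = 2 * M + 2 * NS /\ kind M NS l = KG)%nat \/
  (l = 2 * M + 2 * NS + 1 /\ kind M NS l = KZ)%nat \/
  (2 * M + 2 * NS + 2 <= l /\ kind M NS l = KP)%nat.
Proof.
  destruct (Nat.lt_ge_cases l M). { left. split; auto. apply kind_F; auto. }
  destruct (Nat.lt_ge_cases l (M + 2 * NS)).
  { set (d := (l - M)%nat). destruct (Nat.Even_or_Odd d) as [[k Hk]|[k Hk]].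
    - right; left. exists k. assert (l = M + 2 * k)%nat by lia. repeat split; try lia. subst l. apply kind_A. lia.
    - right; right; left. exists k. assert (l = M + 2 * k + 1)%nat by lia. repeat split; try lia. subst l. apply kind_B. lia. }
  destruct (Nat.lt_ge_cases l (2 * M + 2 * NS)).
  { right; right; right; left. exists (l - M - 2 * NS)%nat. repeat split; try lia.
    replace l with (M + 2 * NS + (l - M - 2 * NS))%nat at 1 by lia. apply kind_E. lia. }
  destruct (Nat.eq_dec l (2 * M + 2 * NS)). { subst. do 4 right; left. split; auto. apply kind_G. }
  destruct (Nat.eq_dec l (2 * M + 2 * NS + 1)). { subst. do 5 right; left. split; auto. apply kind_Z. }
  do 6 right. split; [lia|]. apply kind_P. lia.
Qed.
End Kinds.

Section UnitIter.
Variables N NS M : nat.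
Hypothesis HN : (3 <= N)%nat.
Hypothesis HNS : (1 <= NS)%nat.
Hypothesis HM : (1 <= M)%nat.
Variable be : nat -> bool.
Variable wt : R.
Variables tt a0 : R.
Hypothesis Htt : 0 <= tt.
Hypothesis Ha0 : 0 <= a0.
Hypothesis Hwt : 0 <= wt.

Lemma unit_step l s : st_ok N NS M be wt tt a0 (kind M NS l) s ->
  st_ok N NS M be wt tt a0 (kind M NS (S l)) (new_st N NS M be wt (kind M NS (S l)) s).
Proof.
  intros Hs. destruct (kind_cases M NS (S l)) as [[H1 H2]|[[k [H1 [H2 H3]]]|[[k [H1 [H2 H3]]]|[[k [H1 [H2 H3]]]|[[H1 H2]|[[H1 H2]|[H1 H2]]]]]]].
  - rewrite H2. rewrite kind_F in Hs by lia. replace l with (S l - 1)%nat in Hs by lia. apply step_F; auto; lia.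
  - rewrite H3. apply step_A; auto.
    + intros ->. rewrite kind_F in Hs by lia. replace l with (M - 1)%nat in Hs by lia. auto.
    + intros Hk. replace l with (M + 2 * (k - 1) + 1)%nat in Hs by lia. rewrite kind_B in Hs by lia. auto.
  - rewrite H3. apply step_B; auto. replace l with (M + 2 * k)%nat in Hs by lia. rewrite kind_A in Hs by lia. auto.
  - rewrite H3. destruct k as [|k'].
    + apply step_E0; auto. replace l with (M + 2 * (NS - 1) + 1)%nat in Hs by lia. rewrite kind_B in Hs by lia. auto.
    + apply step_Ek; auto. replace l with (M + 2 * NS + k')%nat in Hs by lia. rewrite kind_E in Hs by lia. auto.
  - rewrite H2. apply step_G; auto. replace l with (M + 2 * NS + (M - 1))%nat in Hs by lia. rewrite kind_E in Hs by lia. auto.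
  - rewrite H2. apply step_Z; auto. replace l with (2 * M + 2 * NS)%nat in Hs by lia. rewrite kind_G in Hs. auto.
  - rewrite H2. destruct (Nat.eq_dec l (2 * M + 2 * NS + 1)).
    + apply (step_P _ _ _ HN HNS HM be wt tt a0 Htt Ha0 Hwt KZ); auto. subst l. rewrite kind_Z in Hs. auto.
    + apply (step_P _ _ _ HN HNS HM be wt tt a0 Htt Ha0 Hwt KP); auto. rewrite kind_P in Hs by lia. auto.
Qed.

Lemma unit_last U s : (2 * M + 2 * NS + 2 <= U)%nat -> st_ok N NS M be wt tt a0 (kind M NS (U - 1)) s ->
  s 0%nat = tt /\ s 1%nat = a0 + wt * gu N NS M be tt.
Proof.
  intros HU Hs.
  assert (E : exK N NS M be wt tt a0 (kind M NS (U - 1)) = exZ N NS M be wt tt a0).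
  { destruct (Nat.eq_dec (U - 1) (2 * M + 2 * NS + 1)) as [E|E].
    - rewrite E, kind_Z. reflexivity.
    - rewrite kind_P by lia. reflexivity. }
  split.
  - rewrite Hs by lia. rewrite E. reflexivity.
  - rewrite Hs by lia. rewrite E. unfold exZ. simpl. reflexivity.
Qed.
End UnitIter.

Lemma sumR_nonneg n f : (forall i, (i < n)%nat -> 0 <= f i) -> 0 <= sumR n f.
Proof. intros H. pose proof (sumR_le n (fun _ => 0) f H). rewrite sumR_const in H0. lra. Qed.

Lemma gu_nonneg N NS M be t : 0 <= gu N NS M be t.
Proof. unfold gu. apply sumR_nonneg. intros. apply gate_nonneg. apply bit_range. Qed.

Section Net.
Variables N NS M C RR U : nat.
Hypothesis HN : (3 <= N)%nat.
Hypothesis HNS : (1 <= NS)%nat.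
Hypothesis HM : (1 <= M)%nat.
Hypothesis HR : (1 <= RR)%nat.
Hypothesis HU : (2 * M + 2 * NS + 2 <= U)%nat.
Variable be : nat -> nat -> bool.
Variable wt : nat -> R.
Hypothesis Hwt : forall m, 0 <= wt m.

Definition wc := (2 * N + 8)%nat.

Definition grow (l i : nat) : row :=
  let c := (i / wc)%nat in let o := (i mod wc)%nat in
  let rho := (l / U)%nat in let lam := (l mod U)%nat in
  rowK N NS M (be (c * RR + rho)%nat) (wt (c * RR + rho)%nat) (kind M NS lam) o.

Definition Lfirst := mkAffine 1 (C * wc) (fun i j => fst (grow 0 i) j) (fun i => snd (grow 0 i)).
Definition Lhid (l : nat) := mkAffine (C * wc) (C * wc)
  (fun i j => if Nat.eqb (i / wc) (j / wc) then fst (grow l i) (j mod wc) else 0) (fun i => snd (grow l i)).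
Definition Lclamp := mkAffine (C * wc) 2 (fun i j => if Nat.eqb (j mod wc) 1 then 1 else 0)
  (fun i => if Nat.eqb i 0 then 0 else -1).
Definition Lout := mkAffine 2 1 (fun i j => if Nat.eqb j 0 then 1 else -1) (fun _ => 0).

Definition Hn := (RR * U)%nat.
Definition Ts := Lfirst :: map Lhid (seq 1 (Hn - 1)) ++ [Lclamp; Lout].

Fixpoint hv (t : R) (l : nat) : nat -> R :=
  match l with O => step Lfirst (fun _ => t) | S l' => step (Lhid (S l')) (hv t l') end.

Lemma wc_pos : (1 <= wc)%nat. Proof. unfold wc; lia. Qed.

Lemma divmod_wc c o : (o < wc)%nat -> ((c * wc + o) / wc = c /\ (c * wc + o) mod wc = o)%nat.
Proof. intros. pose proof wc_pos. split.
  - rewrite Nat.div_add_l by lia. rewrite Nat.div_small by lia. lia.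
  - rewrite Nat.add_comm, Nat.Div0.mod_add. apply Nat.mod_small; lia. Qed.

Lemma Lhid_eval l x c o : (c < C)%nat -> (o < wc)%nat ->
  eval_affine (Lhid l) x (c * wc + o)%nat = dot wc (fst (grow l (c * wc + o))) (fun o' => x (c * wc + o')%nat) + snd (grow l (c * wc + o)).
Proof.
  intros Hc Ho. unfold eval_affine, Lhid. simpl a_in. simpl a_mat. simpl a_bias. f_equal.
  rewrite sumR_mul.
  rewrite (sumR_ext C _ (fun c' => if Nat.eqb c' c then dot wc (fst (grow l (c * wc + o))) (fun o' => x (c * wc + o')%nat) else 0)).
  - apply sumR_pt; auto.
  - intros c' Hc'. destruct (divmod_wc c o Ho) as [D1 D2].
    destruct (Nat.eqb_spec c' c).
    + subst c'. unfold dot. apply sumR_ext. intros o' Ho'. destruct (divmod_wc c o' Ho') as [E1 E2].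
      rewrite D1, E1, Nat.eqb_refl, E2. reflexivity.
    + apply sumR_zero. intros o' Ho'. destruct (divmod_wc c' o' Ho') as [E1 E2].
      rewrite D1, E1. destruct (Nat.eqb_spec c c'); [lia|]. ring.
Qed.

Lemma grow_eq l c o : (o < wc)%nat ->
  grow l (c * wc + o) = rowK N NS M (be (c * RR + l / U)%nat) (wt (c * RR + l / U)%nat) (kind M NS (l mod U)) o.
Proof. intros Ho. unfold grow. destruct (divmod_wc c o Ho) as [D1 D2]. rewrite D1, D2. reflexivity. Qed.

Definition a0f (c rho : nat) (t : R) := sumR rho (fun r => wt (c * RR + r)%nat * gu N NS M (be (c * RR + r)%nat) (relu t)).

Lemma a0f_nonneg c rho t : 0 <= a0f c rho t.
Proof. unfold a0f. apply sumR_nonneg. intros r _.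
  pose proof (gu_nonneg N NS M (be (c * RR + r)%nat) (relu t)).
  pose proof (Hwt (c * RR + r)%nat). nra. Qed.

Definition colinv (t : R) (l : nat) := forall c o, (c < C)%nat -> (o < wc)%nat ->
  hv t l (c * wc + o)%nat = exK N NS M (be (c * RR + l / U)%nat) (wt (c * RR + l / U)%nat) (relu t) (a0f c (l / U) t) (kind M NS (l mod U)) o.

Lemma first_ok t : colinv t 0.
Proof.
  intros c o Hc Ho. simpl hv. unfold step, eval_affine, Lfirst. simpl a_in; simpl a_mat; simpl a_bias.
  rewrite grow_eq by auto. pose proof wc_pos. rewrite Nat.div_small, Nat.mod_small by lia.
  assert (HU0 : (0 < U)%nat) by lia.
  rewrite kind_F by lia. unfold rowK, exK, rowF, exF. unfold a0f. simpl sumR.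
  destruct (Nat.eqb_spec o 0). { subst. unfold r_pass, pt. simpl. f_equal. ring. }
  destruct (Nat.eqb_spec o 1). { subst. unfold r_pass, pt. simpl. rewrite Rmult_0_l, !Rplus_0_l. apply relu_neg; lra. }
  destruct (Nat.eqb_spec o 2). { simpl. unfold r_zero, c0, zz. simpl. rewrite Rmult_0_l, !Rplus_0_l. reflexivity. }
  destruct (Nat.eqb_spec o 3). { simpl. unfold r_zero, c0, zz. simpl. rewrite Rmult_0_l, !Rplus_0_l, Ropp_0. reflexivity. }
  destruct (Nat.eqb_spec o 4). { simpl fst; simpl snd. unfold pt. simpl. rewrite relu_shift by lra.
    f_equal. ring. }
  destruct (Nat.eqb_spec o 5). { simpl fst; simpl snd. unfold pt. simpl.
    assert (0 <= INR (Kseg N NS) - 1) by (assert (HK : (1 <= Kseg N NS)%nat) by (unfold Kseg; lia); apply (le_INR 1) in HK; simpl in HK; lra).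
    replace (relu t - 0 * INR (Kseg N NS) - (INR (Kseg N NS) - 1)) with (relu t - (INR (Kseg N NS) - 1)) by ring.
    rewrite relu_shift by lra. f_equal. ring. }
  unfold r_zero, c0. simpl. rewrite Rmult_0_l, Rplus_0_l. apply relu_neg; lra.
Qed.

Lemma a0f_S c q t : a0f c (S q) t = a0f c q t + wt (c * RR + q)%nat * gu N NS M (be (c * RR + q)%nat) (relu t).
Proof. reflexivity. Qed.

Lemma colinv_all t l : (l < Hn)%nat -> colinv t l.
Proof.
  induction l as [|l IH]; intros Hl. apply first_ok.
  specialize (IH ltac:(lia)). intros c o Hc Ho.
  simpl hv. unfold step. rewrite Lhid_eval by auto. rewrite grow_eq by auto.
  assert (HU1 : (0 < U)%nat) by lia.
  set (q := (l / U)%nat). set (r := (l mod U)%nat).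
  assert (Hl' : l = (U * q + r)%nat) by (unfold q, r; apply Nat.div_mod; lia).
  assert (Hr : (r < U)%nat) by (unfold r; apply Nat.mod_upper_bound; lia).
  assert (Hloc : st_ok N NS M (be (c * RR + q)%nat) (wt (c * RR + q)%nat) (relu t) (a0f c q t) (kind M NS r)
                  (fun o' => hv t l (c * wc + o')%nat)).
  { intros o' Ho'. unfold wc in IH. apply IH; auto. }
  destruct (Nat.eq_dec (S r) U) as [E|E].
  - assert (D1 : (S l / U = S q)%nat).
    { symmetry. apply (Nat.div_unique _ _ _ 0); lia. }
    assert (D2 : (S l mod U = 0)%nat).
    { symmetry. apply (Nat.mod_unique _ _ (S q)); lia. }
    rewrite D1, D2. rewrite kind_F by lia.
    replace r with (U - 1)%nat in Hloc by lia.
    destruct (unit_last N NS M ltac:(lia) HNS HM _ _ (relu t) (a0f c q t) U _ HU Hloc) as [S0 S1].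
    pose proof (step_F0 N NS M ltac:(lia) HNS HM (be (c * RR + S q)%nat) (wt (c * RR + S q)%nat) (relu t) (a0f c (S q) t)
      (relu_ge0 t) (a0f_nonneg c (S q) t) (fun o' => hv t l (c * wc + o')%nat) S0) as HF.
    assert (S1' : hv t l (c * wc + 1)%nat = a0f c (S q) t) by (rewrite a0f_S; exact S1).
    specialize (HF S1' o Ho). unfold new_st in HF. unfold wc. rewrite <- HF. reflexivity.
  - assert (D1 : (S l / U = q)%nat).
    { symmetry. apply (Nat.div_unique _ _ _ (S r)); lia. }
    assert (D2 : (S l mod U = S r)%nat).
    { symmetry. apply (Nat.mod_unique _ _ q); lia. }
    rewrite D1, D2.
    pose proof (unit_step N NS M ltac:(lia) HNS HM _ _ (relu t) (a0f c q t) (relu_ge0 t) (a0f_nonneg c q t) (Hwt _) r _ Hloc) as HS.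
    specialize (HS o Ho). unfold new_st in HS. unfold wc. rewrite <- HS. reflexivity.
Qed.

Lemma fold_hv t n : fold_left (fun v T => step T v) (map Lhid (seq 1 n)) (hv t 0) = hv t n.
Proof.
  induction n. reflexivity.
  rewrite seq_S, map_app, fold_left_app, IHn. simpl. replace (1 + n)%nat with (S n) by lia. reflexivity.
Qed.

Lemma Hn_pos : (1 <= Hn)%nat. Proof. unfold Hn. nia. Qed.

Lemma final_regs t c : (c < C)%nat -> hv t (Hn - 1) (c * wc + 1)%nat = a0f c RR t.
Proof.
  intros Hc. pose proof (colinv_all t (Hn - 1) ltac:(pose proof Hn_pos; lia)) as HI.
  assert (D1 : ((Hn - 1) / U = RR - 1)%nat).
  { symmetry. apply (Nat.div_unique _ _ _ (U - 1)); unfold Hn; nia. }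
  assert (D2 : ((Hn - 1) mod U = U - 1)%nat).
  { symmetry. apply (Nat.mod_unique _ _ (RR - 1)); unfold Hn; nia. }
  assert (Hloc : st_ok N NS M (be (c * RR + (RR - 1))%nat) (wt (c * RR + (RR - 1))%nat) (relu t) (a0f c (RR - 1) t) (kind M NS (U - 1))
                  (fun o' => hv t (Hn - 1) (c * wc + o')%nat)).
  { intros o' Ho'. unfold wc in HI. rewrite HI by (auto; unfold wc; lia). rewrite D1, D2. reflexivity. }
  destruct (unit_last N NS M ltac:(lia) HNS HM _ _ (relu t) (a0f c (RR - 1) t) U _ HU Hloc) as [S0 S1].
  rewrite S1. assert (E : a0f c RR t = a0f c (S (RR - 1)) t) by (f_equal; lia). rewrite E, a0f_S. reflexivity.
Qed.

Lemma realize_eq t : realize Ts t = clampA 1 (sumR C (fun c => a0f c RR t)).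
Proof.
  unfold realize, Ts. rewrite app_comm_cons. rewrite eval_net_app by discriminate.
  simpl fold_left. fold (hv t 0). rewrite fold_hv.
  simpl eval_net. unfold eval_affine at 1. simpl a_in. simpl a_mat. simpl a_bias.
  unfold step. simpl sumR.
  assert (Hcl : forall i, eval_affine Lclamp (hv t (Hn - 1)) i = sumR C (fun c => a0f c RR t) + (if Nat.eqb i 0 then 0 else -1)).
  { intros i. unfold eval_affine, Lclamp. simpl a_in; simpl a_mat; simpl a_bias. f_equal.
    rewrite sumR_mul. apply sumR_ext. intros c Hc.
    rewrite (sumR_ext wc _ (fun o => if Nat.eqb o 1 then hv t (Hn - 1) (c * wc + 1)%nat else 0)).
    - rewrite sumR_pt by (unfold wc; lia). apply final_regs; auto.
    - intros o Ho. destruct (divmod_wc c o Ho) as [_ E]. rewrite E. destruct (Nat.eqb_spec o 1). subst; ring. ring. }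
  rewrite !Hcl. simpl Nat.eqb. unfold clampA. cbv beta iota. set (SS := sumR C (fun c => a0f c RR t)).
  replace (SS + 0) with SS by ring. replace (SS + -1) with (SS - 1) by ring. ring.
Qed.

Lemma Ts_chain : chain_ok 1 Ts.
Proof.
  unfold Ts. simpl. split; auto.
  assert (G : forall n a, chain_ok (C * wc) (map Lhid (seq a n) ++ [Lclamp; Lout])).
  { induction n; intros a. simpl. repeat split. simpl. split; auto. }
  apply G.
Qed.

Lemma Ts_hidden Wb : (C * wc <= Wb)%nat -> (2 <= Wb)%nat -> hidden_le Wb Ts.
Proof.
  intros H1 H2. unfold Ts.
  assert (G : forall n a, hidden_le Wb (map Lhid (seq a n) ++ [Lclamp; Lout])).
  { induction n; intros a. simpl. repeat split; auto. simpl.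
    destruct (map Lhid (seq (S a) n) ++ [Lclamp; Lout]) eqn:E.
    - destruct n; simpl in E; discriminate.
    - split; [simpl; auto|]. rewrite <- E. apply IHn. }
  simpl. destruct (map Lhid (seq 1 (Hn - 1)) ++ [Lclamp; Lout]) eqn:E.
  - destruct (Hn - 1)%nat; simpl in E; discriminate.
  - split; [simpl; auto|]. rewrite <- E. apply G.
Qed.

Lemma Ts_len : length Ts = (Hn + 2)%nat.
Proof. unfold Ts. simpl. rewrite length_app, length_map, length_seq. simpl. pose proof Hn_pos. lia. Qed.

Lemma Ts_nonnil : Ts <> [].
Proof. unfold Ts. discriminate. Qed.
End Net.

Fixpoint approx (D : nat) (y : R) : nat :=
  match D with O => O | S D' => if Rle_dec y (INR D') then approx D' y else D' end.

Lemma approx_spec D y : (1 <= D)%nat -> 0 <= y <= INR D ->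
  (approx D y < D)%nat /\ INR (approx D y) <= y <= INR (approx D y) + 1.
Proof.
  induction D as [|D IH]; intros HD Hy. lia.
  simpl. destruct (Rle_dec y (INR D)) as [H|H].
  - destruct (Nat.eq_dec D 0) as [E|E].
    + subst D. simpl in *. split; [lia|]. lra.
    + destruct (IH ltac:(lia) ltac:(lra)) as [A B]. split; [lia|exact B].
  - rewrite S_INR in Hy. split; [lia|]. lra.
Qed.

Lemma binary_sum P : forall n, (n < 2 ^ P)%nat ->
  sumR P (fun m => 2 ^ m * b2r (Nat.testbit n m)) = INR n.
Proof.
  induction P as [|P IH]; intros n Hn.
  - simpl in Hn. assert (n = 0)%nat by lia. subst. simpl. reflexivity.
  - simpl sumR.
    assert (HP : (0 < 2 ^ P)%nat) by (apply Nat.neq_0_lt_0, Nat.pow_nonzero; lia).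
    rewrite (sumR_ext P _ (fun m => 2 ^ m * b2r (Nat.testbit (n mod 2 ^ P) m))).
    2:{ intros m Hm. rewrite Nat.mod_pow2_bits_low by auto. reflexivity. }
    rewrite IH by (apply Nat.mod_upper_bound; lia).
    assert (Hq : (n / 2 ^ P < 2)%nat) by (apply Nat.Div0.div_lt_upper_bound; simpl in Hn; lia).
    assert (Hb : b2r (Nat.testbit n P) = INR (n / 2 ^ P)).
    { rewrite Nat.testbit_eqb. destruct (Nat.lt_ge_cases (n / 2 ^ P) 1).
      - replace (n / 2 ^ P)%nat with 0%nat by lia. simpl. reflexivity.
      - replace (n / 2 ^ P)%nat with 1%nat by lia. simpl. reflexivity. }
    rewrite Hb. rewrite (Nat.div_mod n (2 ^ P)) at 3 by lia.
    rewrite plus_INR, mult_INR, pow_INR. replace (INR 2) with 2 by (simpl; ring). ring.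
Qed.

Lemma log2_up_ge2 a : (3 <= a)%nat -> (2 <= Nat.log2_up a)%nat.
Proof. intros H. destruct (Nat.log2_up_spec a ltac:(lia)) as [_ H2].
  destruct (Nat.le_gt_cases (Nat.log2_up a) 1) as [H3|H3]; [|lia].
  assert (2 ^ Nat.log2_up a <= 2 ^ 1)%nat by (apply Nat.pow_le_mono_r; lia). simpl in H0. lia. Qed.

Lemma le_pow_log2_up a : (1 <= a)%nat -> (a <= 2 ^ Nat.log2_up a)%nat.
Proof. intros H. destruct (Nat.eq_dec a 1). subst. simpl. lia. apply Nat.log2_up_spec. lia. Qed.

Lemma lip_final L : (2 <= L)%nat -> 3 ^ (S L) <= 4 * 2 ^ (L * L) + 2 * INR (L * L).
Proof.
  intros HL. assert (0 <= INR (L * L)) by apply pos_INR.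
  assert (A : 3 ^ L <= 4 ^ L) by (apply pow_incr; lra).
  assert (B : 4 ^ L <= 2 ^ (L * L)).
  { replace 4 with (2 ^ 2) by (simpl; ring). rewrite <- pow_mult. apply Rle_pow; [lra|]. nia. }
  assert (0 <= 4 ^ L) by (apply pow_le; lra). change (3 ^ S L) with (3 * 3 ^ L). lra.
Qed.

Section Main.
Variables W L s : nat.
Variable xi : nat -> R.
Hypothesis HW : (6 <= W)%nat.
Hypothesis HL : (2 <= L)%nat.
Hypothesis Hs : (1 <= s)%nat.
Hypothesis Hxi : forall i, (i < W * W * (L * L))%nat -> 0 <= xi i <= 1.

Definition lw := Nat.log2_up (2 * W).
Definition lL := Nat.log2_up (2 * L).
Definition Cc := (2 * s * lw)%nat.
Definition Pp := (Cc * lL)%nat.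
Definition Nn := (2 * W)%nat.
Definition NSs := (L / 2)%nat.
Definition Uu := (4 * L)%nat.
Definition nI (i : nat) := approx (2 ^ Pp) (xi i * 2 ^ Pp).
Definition bef (m i : nat) := if Nat.ltb i (W * W * (L * L)) then Nat.testbit (nI i) m else false.
Definition wtf (m : nat) := 2 ^ m / 2 ^ Pp.
Definition TsF := Ts Nn NSs L Cc lL Uu bef wtf.

Lemma lw_ge2 : (2 <= lw)%nat. Proof. unfold lw. apply log2_up_ge2. lia. Qed.
Lemma lL_ge2 : (2 <= lL)%nat. Proof. unfold lL. apply log2_up_ge2. lia. Qed.
Lemma Nn_ge3 : (3 <= Nn)%nat. Proof. unfold Nn. lia. Qed.
Lemma NSs_ge1 : (1 <= NSs)%nat. Proof. unfold NSs. pose proof (Nat.div_mod L 2 ltac:(lia)). pose proof (Nat.mod_upper_bound L 2 ltac:(lia)). lia. Qed.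
Lemma Uu_ok : (2 * L + 2 * NSs + 2 <= Uu)%nat.
Proof. unfold NSs, Uu. pose proof (Nat.div_mod L 2 ltac:(lia)). pose proof (Nat.mod_upper_bound L 2 ltac:(lia)). lia. Qed.
Lemma wtf_nonneg m : 0 <= wtf m.
Proof. unfold wtf. apply Rmult_le_pos. apply pow_le; lra. left. apply Rinv_0_lt_compat, pow_lt; lra. Qed.

Lemma points_ok : (W * W * (L * L) <= L * Kseg Nn NSs)%nat.
Proof.
  unfold Kseg, Zs, Nn, NSs. set (h := (L / 2)%nat).
  assert (Hh : (L = 2 * h \/ L = 2 * h + 1)%nat) by (unfold h; pose proof (Nat.div_mod L 2 ltac:(lia)); pose proof (Nat.mod_upper_bound L 2 ltac:(lia)); lia).
  assert (h1 : (1 <= h)%nat) by lia.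
  assert (K1 : (W * W * L <= h * (2 * W * (2 * W) - 1) + 1)%nat).
  { assert (E : (2 * W * (2 * W) - 1 = 4 * W * W - 1)%nat) by lia. rewrite E.
    assert (1 <= W * W)%nat by nia.
    destruct Hh as [E2|E2]; rewrite E2; nia. }
  assert (L * (W * W * L) <= L * (h * (2 * W * (2 * W) - 1) + 1))%nat by (apply Nat.mul_le_mono_l; exact K1).
  nia.
Qed.

Definition SS (t : R) := sumR Pp (fun m => wtf m * gu Nn NSs L (bef m) (relu t)).

Lemma realize_SS t : realize TsF t = clampA 1 (SS t).
Proof.
  unfold TsF. rewrite realize_eq; try (apply Nn_ge3 || apply NSs_ge1 || lia || apply Uu_ok || apply wtf_nonneg).
  2: pose proof lL_ge2; lia.
  f_equal. unfold SS, Pp. rewrite sumR_mul. apply sumR_ext. intros c Hc. unfold a0f. reflexivity.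
Qed.

Lemma NN_ok : NN (8 * s * (2 * W + 1) * Nat.log2_up (2 * W) + 2) (4 * L * Nat.log2_up (2 * L) + 1) (realize TsF).
Proof.
  exists TsF. unfold TsF. split; [apply Ts_nonnil|]. split; [apply Ts_chain|]. split.
  - apply Ts_hidden.
    + unfold Cc, wc, Nn, lw. nia.
    + pose proof lw_ge2. unfold lw in *. nia.
  - split.
    + rewrite Ts_len; try (apply Nn_ge3 || apply NSs_ge1 || lia || apply Uu_ok). 2: pose proof lL_ge2; lia.
      unfold Hn, Uu, lL. lia.
    + intros; reflexivity.
Qed.

Lemma sum_wtf : sumR Pp wtf <= 1.
Proof.
  unfold wtf. rewrite (sumR_ext Pp _ (fun m => / 2 ^ Pp * 2 ^ m)) by (intros; unfold Rdiv; ring).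
  rewrite sumR_scal, sumR_geom. assert (0 < 2 ^ Pp) by (apply pow_lt; lra).
  rewrite Rmult_minus_distr_l, Rinv_l by lra. assert (0 < / 2 ^ Pp) by (apply Rinv_0_lt_compat; lra). lra.
Qed.

Lemma lip_ok : lip_le (realize TsF) (4 * 2 ^ (L * L) + 2 * INR (L * L)).
Proof.
  intros x y. rewrite !realize_SS.
  eapply Rle_trans; [apply clampA_lip; lra|].
  unfold SS. rewrite <- sumR_minus. eapply Rle_trans; [apply sumR_abs|].
  eapply Rle_trans.
  - apply (sumR_le Pp _ (fun m => wtf m * (3 ^ (S L) * Rabs (x - y)))).
    intros m Hm. rewrite <- Rmult_minus_distr_l, Rabs_mult, (Rabs_right (wtf m)) by (pose proof (wtf_nonneg m); lra).
    apply Rmult_le_compat_l; [apply wtf_nonneg|].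
    apply (lip_cells (fun t => gu Nn NSs L (bef m) (relu t))); [apply pow_le; lra|].
    apply gu_cell. pose proof Nn_ge3; lia. apply NSs_ge1. lia.
  - rewrite (sumR_ext Pp _ (fun m => (3 ^ S L * Rabs (x - y)) * wtf m)) by (intros; ring).
    rewrite sumR_scal. pose proof sum_wtf. pose proof (lip_final L HL).
    assert (0 <= 3 ^ S L * Rabs (x - y)) by (apply Rmult_le_pos; [apply pow_le; lra|apply Rabs_pos]).
    assert (0 <= Rabs (x - y)) by apply Rabs_pos.
    assert (0 <= sumR Pp wtf) by (apply sumR_nonneg; intros; apply wtf_nonneg).
    nra.
Qed.

Lemma range_ok t : 0 <= realize TsF t <= 1.
Proof. rewrite realize_SS. apply clampA_range. lra. Qed.

Lemma prec_nat : ((W * L) ^ (2 * s) <= 2 ^ Pp)%nat.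
Proof.
  pose proof lw_ge2. pose proof lL_ge2.
  assert (A : (W * L <= 2 ^ (lw + lL))%nat).
  { rewrite Nat.pow_add_r. apply Nat.mul_le_mono.
    - pose proof (le_pow_log2_up (2 * W) ltac:(lia)). unfold lw. lia.
    - pose proof (le_pow_log2_up (2 * L) ltac:(lia)). unfold lL. lia. }
  eapply Nat.le_trans. apply Nat.pow_le_mono_l. exact A.
  rewrite <- Nat.pow_mul_r. apply Nat.pow_le_mono_r. lia.
  unfold Pp, Cc. nia.
Qed.

Lemma val_ok i : (i < W * W * (L * L))%nat -> Rabs (realize TsF (INR i) - xi i) <= / (INR (W * L)) ^ (2 * s).
Proof.
  intros Hi. rewrite realize_SS. unfold SS. rewrite relu_pos by apply pos_INR.
  assert (HP : 0 < 2 ^ Pp) by (apply pow_lt; lra).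
  assert (E2 : INR (2 ^ Pp) = 2 ^ Pp) by (rewrite pow_INR; simpl; f_equal; ring).
  destruct (Hxi i Hi) as [X1 X2].
  assert (H1 : (1 <= 2 ^ Pp)%nat) by (apply Nat.neq_0_lt_0, Nat.pow_nonzero; lia).
  destruct (approx_spec (2 ^ Pp) (xi i * 2 ^ Pp) H1) as [A1 A2].
  { rewrite E2. split; nra. }
  fold (nI i) in A1, A2.
  rewrite (sumR_ext Pp _ (fun m => / 2 ^ Pp * (2 ^ m * b2r (Nat.testbit (nI i) m)))).
  2:{ intros m Hm. rewrite gu_int.
      - unfold bef. destruct (Nat.ltb_spec i (W * W * (L * L))); [|lia]. unfold wtf, Rdiv. ring.
      - pose proof Nn_ge3; lia.
      - apply NSs_ge1.
      - lia.
      - pose proof points_ok. lia. }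
  rewrite sumR_scal, binary_sum by auto.
  assert (0 <= INR (nI i)) by apply pos_INR.
  assert (A3 : INR (nI i) + 1 <= 2 ^ Pp) by (rewrite <- E2, <- S_INR; apply le_INR; lia).
  rewrite clampA_mid.
  2:{ split. apply Rmult_le_pos; [left; apply Rinv_0_lt_compat; lra|lra].
      apply (Rmult_le_reg_l (2 ^ Pp)); auto. rewrite <- Rmult_assoc, Rinv_r by lra. lra. }
  assert (B : Rabs (/ 2 ^ Pp * INR (nI i) - xi i) <= / 2 ^ Pp).
  { replace (/ 2 ^ Pp * INR (nI i) - xi i) with (/ 2 ^ Pp * (INR (nI i) - xi i * 2 ^ Pp)) by (field; lra).
    rewrite Rabs_mult, Rabs_right by (left; apply Rinv_0_lt_compat; lra).
    rewrite <- (Rmult_1_r (/ 2 ^ Pp)) at 2. apply Rmult_le_compat_l. left; apply Rinv_0_lt_compat; lra.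
    unfold Rabs; destruct Rcase_abs; lra. }
  eapply Rle_trans; [exact B|].
  apply Rinv_le_contravar.
  - apply pow_lt. rewrite mult_INR. apply Rmult_lt_0_compat; apply lt_0_INR; lia.
  - rewrite <- pow_INR, <- E2. apply le_INR. apply prec_nat.
Qed.
End Main.

Theorem proposition31_main (W L s : nat) (xi : nat -> R) :
  (6 <= W)%nat -> (2 <= L)%nat ->
  (forall i, (i < W * W * (L * L))%nat -> 0 <= xi i <= 1) ->
  exists phi : R -> R,
    NN (8 * s * (2 * W + 1) * Nat.log2_up (2 * W) + 2)
       (4 * L * Nat.log2_up (2 * L) + 1) phi /\
    lip_le phi (4 * 2 ^ (L * L) + 2 * INR (L * L)) /\
    (forall i, (i < W * W * (L * L))%nat ->
       Rabs (phi (INR i) - xi i) <= / (INR (W * L)) ^ (2 * s)) /\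
    (forall t, 0 <= phi t <= 1).
Proof.
  intros HW HL Hxi.
  destruct (Nat.eq_dec s 0) as [Es|Es].
  - subst s. exists (fun _ => 0). split; [|split; [|split]].
    + exists [mkAffine 1 1 (fun _ _ => 0) (fun _ => 0)]. split; [discriminate|]. split; [simpl; auto|].
      split; [simpl; auto|]. split; [simpl; lia|].
      intros t. unfold realize. simpl. unfold eval_affine. simpl. ring.
    + intros x y. replace (0 - 0) with 0 by ring. rewrite Rabs_R0.
      apply Rmult_le_pos; [|apply Rabs_pos]. pose proof (pos_INR (L * L)). assert (0 < 2 ^ (L * L)) by (apply pow_lt; lra). lra.
    + intros i Hi. simpl. rewrite Rinv_1. destruct (Hxi i Hi). rewrite Rabs_left1 by lra. lra.
    + intros; lra.
  - exists (realize (TsF W L s xi)). split; [|split; [|split]].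
    + apply NN_ok; lia.
    + apply lip_ok; auto; lia.
    + intros i Hi. apply val_ok; auto; lia.
    + intros t. apply range_ok.
all: lia.
Qed.

Theorem proposition31 (W L s : nat) (xi : nat -> R) :
  (6 <= W)%nat -> (2 <= L)%nat ->
  (forall i, (i < W * W * (L * L))%nat -> 0 <= xi i <= 1) ->
  exists phi : R -> R,
    NN (8 * s * (2 * W + 1) * Nat.log2_up (2 * W) + 2)
       (4 * L * Nat.log2_up (2 * L) + 1) phi /\
    lip_le phi (4 * 2 ^ (L * L) + 2 * INR (L * L)) /\
    (forall i, (i < W * W * (L * L))%nat ->
       Rabs (phi (INR i) - xi i) <= / (INR (W * L)) ^ (2 * s)) /\
    (forall t, 0 <= phi t <= 1).
Proof.
  exact (proposition31_main W L s xi).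
Qed.
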